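(* Assume the Setting and consider Algorithm 1 (with any $\beta\in(0,\infty]$) using a sequence of noisy data $y^{\delta_k}$ with $\|y^{\delta_k}-y\|\le\delta_k$, $0<\delta_k\to0$, where $\tau>1$ and $\mu_0>0$ satisfy $1-\frac{1+\eta}{\tau}-\eta-\frac{\mu_0}{4\sigma}>0$. Let $n_k:=n_{\delta_k}$ be the stopping index. Then there is a subsequence $(k_l)$ such that $x_{n_{k_l}}^{\delta_{k_l}}\rightharpoonup x^*$ weakly as $l\to\infty$ for some solution $x^*$ of $F(x)=y$ with $x^*\in B_{2\rho}(x_0)$. If in addition $\mathcal R(x)=\frac12\|x\|^2$ and $\mathrm{Ker}(L(x^\dagger))\subset\mathrm{Ker}(L(x))$ for all $x\in B_{2\rho}(x_0)$, then $x_{n_k}^{\delta_k}\rightharpoonup x^\dagger$ as $k\to\infty$, where $x^\dagger$ is the unique solution of $F(x)=y$ minimizing $\|x-x_0\|$.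
   Context: Setting. Let $X,Y$ be real Hilbert spaces. Let $\mathcal R:X\to(-\infty,\infty]$ be proper, lower semicontinuous and strongly convex with constant $\sigma>0$, i.e. $\mathcal R(t\bar x+(1-t)x)+\sigma t(1-t)\|\bar x-x\|^2\le t\mathcal R(\bar x)+(1-t)\mathcal R(x)$ for all $\bar x,x\in\mathrm{dom}(\mathcal R)$ and $t\in[0,1]$. For $\xi\in\partial\mathcal R(x)$ (subdifferential) the Bregman distance is $D_{\mathcal R}^{\xi}(z,x)=\mathcal R(z)-\mathcal R(x)-\langle\xi,z-x\rangle$. The convex conjugate $\mathcal R^*$ is differentiable with $\|\nabla\mathcal R^*(\bar\xi)-\nabla\mathcal R^*(\xi)\|\le\|\bar\xi-\xi\|/(2\sigma)$, and $\nabla\mathcal R^*(\xi)=\arg\min_{x\in X}\{\mathcal R(x)-\langle\xi,x\rangle\}$ (unique minimizer), with $\xi\in\partial\mathcal R(\nabla\mathcal R^*(\xi))$. Let $F:\mathrm{dom}(F)\subset X\to Y$ and $y\in Y$. Assume: (b) there are $\rho>0$, $x_0\in X$, $\xi_0\in\partial\mathcal R(x_0)$ with $B_{2\rho}(x_0):=\{x:\|x-x_0\|\le 2\rho\}\subset\mathrm{dom}(F)$, and $F(x)=y$ has a solution $\bar x$ with $D_{\mathcal R}^{\xi_0}(\bar x,x_0)\le\sigma\rho^2$; (c) $F$ is weakly closed: if $x_n\in\mathrm{dom}(F)$, $x_n\rightharpoonup x$ and $F(x_n)\to v$, then $x\in\mathrm{dom}(F)$ and $F(x)=v$; (d) there are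 bounded linear operators $L(x):X\to Y$, $x\in B_{2\rho}(x_0)$, with $x\mapsto L(x)$ continuous on $B_{2\rho}(x_0)$, a constant $\eta\in[0,1)$ with $\|F(x)-F(\bar x)-L(\bar x)(x-\bar x)\|\le\eta\|F(x)-F(\bar x)\|$ for all $x,\bar x\in B_{2\rho}(x_0)$, and a constant $L>0$ with $\|L(x)\|\le L$ on $B_{2\rho}(x_0)$. Under these assumptions $F(x)=y$ has a unique solution $x^\dagger\in\mathrm{dom}(F)$ minimizing $D_{\mathcal R}^{\xi_0}(x,x_0)$ over all solutions; it satisfies $\|x^\dagger-x_0\|\le\rho$. Algorithm 1 (noisy data $y^\delta$ with $\|y^\delta-y\|\le\delta$, $\delta>0$). Parameters: $\tau>1$, $\beta\in(0,\infty]$, $\mu_0>0$, $\mu_1>0$, and a fixed choice of one of two step-size rules: (constant) $\alpha_n^\delta=\mu_0/L^2$, or (adaptive) $\alpha_n^\delta=\min\{\mu_0\|r_n^\delta\|^2/\|g_n^\delta\|^2,\mu_1\}$ (with $\mu_0\|r_n^\delta\|^2/\|g_n^\delta\|^2:=+\infty$ if $g_n^\delta=0$). Set $\xi_{-1}^\delta=\xi_0^\delta=\xi_0$, $x_0^\delta=x_0=\nabla\mathcal R^*(\xi_0)$. For $n\ge0$: (i) $r_n^\delta:=F(x_n^\delta)-y^\delta$; if $\|r_n^\delta\|\le\tau\delta$, stop and output $x_n^\delta$ (the stopping index is denoted $n_\delta$; it is finite under the hypotheses of the claim). (ii) $g_n^\delta:=L(x_n^\delta)^*r_n^\delta$ and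 $\alpha_n^\delta$ by the chosen rule. (iii) $m_n^\delta:=\xi_n^\delta-\xi_{n-1}^\delta$; $\tilde\gamma_0^\delta:=0$ and for $n\ge1$, $\tilde\gamma_n^\delta:=\langle m_n^\delta,x_n^\delta-x_{n-1}^\delta\rangle-(1-\eta)\alpha_{n-1}^\delta\|r_{n-1}^\delta\|^2+(1+\eta)\alpha_{n-1}^\delta\delta\|r_{n-1}^\delta\|+\beta_{n-1}^\delta\tilde\gamma_{n-1}^\delta$. (iv) $\beta_n^\delta:=\min\{\max\{0,(\alpha_n^\delta\langle g_n^\delta,m_n^\delta\rangle-2\sigma\tilde\gamma_n^\delta)/\|m_n^\delta\|^2\},\beta\}$ if $m_n^\delta\ne0$, and $\beta_n^\delta:=0$ if $m_n^\delta=0$. (v) $\xi_{n+1}^\delta:=\xi_n^\delta-\alpha_n^\delta g_n^\delta+\beta_n^\delta m_n^\delta$, $x_{n+1}^\delta:=\nabla\mathcal R^*(\xi_{n+1}^\delta)$. *)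

(* Defs.v *)
From HB Require Import structures.
From mathcomp Require Import all_boot all_order all_algebra.
From mathcomp Require Import reals.
Set Implicit Arguments. Unset Strict Implicit. Unset Printing Implicit Defensive.
Import Order.TTheory GRing.Theory Num.Theory.
Local Open Scope ring_scope.

Definition seq_cvg (R : realType) (u : nat -> R) (l : R) : Prop :=
  forall eps : R, 0 < eps -> exists N : nat, forall n : nat, (N <= n)%N -> `|u n - l| < eps.

Definition hnorm (R : realType) (X : lmodType R) (ip : X -> X -> R) (x : X) : R :=
  Num.sqrt (ip x x).

Definition is_inner_product (R : realType) (X : lmodType R) (ip : X -> X -> R) : Prop :=
  (forall x y, ip x y = ip y x) /\
  (forall (a : R) (x y z : X), ip (a *: x + y) z = a * ip x z + ip y z) /\
  (forall x, 0 <= ip x x) /\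
  (forall x, ip x x = 0 -> x = 0).

Definition strong_cvg (R : realType) (X : lmodType R) (ip : X -> X -> R)
  (u : nat -> X) (l : X) : Prop :=
  seq_cvg (fun n => hnorm ip (u n - l)) 0.

Definition weak_cvg (R : realType) (X : lmodType R) (ip : X -> X -> R)
  (u : nat -> X) (l : X) : Prop :=
  forall z : X, seq_cvg (fun n => ip (u n) z) (ip l z).

Definition cauchy_seq (R : realType) (X : lmodType R) (ip : X -> X -> R)
  (u : nat -> X) : Prop :=
  forall eps : R, 0 < eps -> exists N : nat, forall m n : nat,
    (N <= m)%N -> (N <= n)%N -> hnorm ip (u m - u n) < eps.

Definition is_hilbert (R : realType) (X : lmodType R) (ip : X -> X -> R) : Prop :=
  is_inner_product ip /\
  (forall u : nat -> X, cauchy_seq ip u -> exists l, strong_cvg ip u l).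

(* An extended-valued functional R : X -> (-oo, +oo] is represented by its
   effective domain dom and its (real) values f on dom; off dom it is +oo. *)
Definition proper_fun (R : realType) (X : lmodType R) (dom : X -> Prop) : Prop :=
  exists x, dom x.

Definition lsc_fun (R : realType) (X : lmodType R) (ip : X -> X -> R)
  (dom : X -> Prop) (f : X -> R) : Prop :=
  forall (c : R) (u : nat -> X) (x : X),
    (forall n, dom (u n) /\ f (u n) <= c) -> strong_cvg ip u x -> dom x /\ f x <= c.

Definition strongly_convex (R : realType) (X : lmodType R) (ip : X -> X -> R)
  (dom : X -> Prop) (f : X -> R) (sigma : R) : Prop :=
  forall (xb x : X) (t : R), dom xb -> dom x -> 0 <= t <= 1 ->
    dom (t *: xb + (1 - t) *: x) /\
    f (t *: xb + (1 - t) *: x) + sigma * t * (1 - t) * hnorm ip (xb - x) ^+ 2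
      <= t * f xb + (1 - t) * f x.

Definition subdiff (R : realType) (X : lmodType R) (ip : X -> X -> R)
  (dom : X -> Prop) (f : X -> R) (xi x : X) : Prop :=
  dom x /\ forall z, dom z -> f x + ip xi (z - x) <= f z.

Definition bregman (R : realType) (X : lmodType R) (ip : X -> X -> R)
  (f : X -> R) (xi z x : X) : R :=
  f z - f x - ip xi (z - x).

(* gradRs xi is the minimizer of R(x) - <xi, x>, i.e. gradRs = grad R^* *)
Definition is_grad_conj (R : realType) (X : lmodType R) (ip : X -> X -> R)
  (dom : X -> Prop) (f : X -> R) (gradRs : X -> X) : Prop :=
  forall xi : X, dom (gradRs xi) /\
    forall z, dom z -> f (gradRs xi) - ip xi (gradRs xi) <= f z - ip xi z.

Definition weakly_closed (R : realType) (X Y : lmodType R)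
  (ipX : X -> X -> R) (ipY : Y -> Y -> R) (domF : X -> Prop) (F : X -> Y) : Prop :=
  forall (u : nat -> X) (x : X) (v : Y),
    (forall n, domF (u n)) -> weak_cvg ipX u x ->
    strong_cvg ipY (fun n => F (u n)) v -> domF x /\ F x = v.

Inductive step_rule := ConstantStep | AdaptiveStep.

(* state at iteration n:
   (xi_n, xi_{n-1}, x_n, x_{n-1}, alpha_{n-1}, ||r_{n-1}||, beta_{n-1}, gamma~_{n-1}) *)
Record alg_state (R : realType) (X : lmodType R) := AlgState {
  st_xi : X; st_xip : X; st_x : X; st_xp : X;
  st_ap : R; st_rp : R; st_bp : R; st_gp : R }.

(* min{v, beta} with beta in (0, +oo]; None stands for beta = +oo *)
Definition cap_beta (R : realType) (beta : option R) (v : R) : R :=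
  match beta with Some b => Order.min v b | None => v end.

Definition alg_step (R : realType) (X Y : lmodType R)
  (ipX : X -> X -> R) (ipY : Y -> Y -> R) (F : X -> Y) (Lstar : X -> Y -> X)
  (gradRs : X -> X) (sigma eta Lc mu0 mu1 : R) (rule : step_rule)
  (beta : option R) (delta : R) (yd : Y) (n : nat) (s : alg_state X)
  : alg_state X :=
  let r := F (st_x s) - yd in
  let g := Lstar (st_x s) r in
  let alpha := match rule with
               | ConstantStep => mu0 / Lc ^+ 2
               | AdaptiveStep =>
                   if g == 0 then mu1
                   else Order.min (mu0 * hnorm ipY r ^+ 2 / hnorm ipX g ^+ 2) mu1
               end in
  let m := st_xi s - st_xip s in
  let gam := match n with
             | 0%N => 0
             | _.+1 => ipX m (st_x s - st_xp s)
                       - (1 - eta) * st_ap s * st_rp s ^+ 2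
                       + (1 + eta) * st_ap s * delta * st_rp s
                       + st_bp s * st_gp s
             end in
  let bet := if m == 0 then 0
             else cap_beta beta
                    (Order.max 0 ((alpha * ipX g m - 2 * sigma * gam) / hnorm ipX m ^+ 2)) in
  let xi' := st_xi s - alpha *: g + bet *: m in
  @AlgState R X xi' (st_xi s) (gradRs xi') (st_x s) alpha (hnorm ipY r) bet gam.

(* state at iteration n (the iteration is run without stopping; the stopping
   rule is applied separately through [is_stop_index]) *)
Fixpoint alg_state_at (R : realType) (X Y : lmodType R)
  (ipX : X -> X -> R) (ipY : Y -> Y -> R) (F : X -> Y) (Lstar : X -> Y -> X)
  (gradRs : X -> X) (sigma eta Lc mu0 mu1 : R) (rule : step_rule)
  (beta : option R) (xi0 x0 : X) (delta : R) (yd : Y) (n : nat) : alg_state X :=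
  match n with
  | 0%N => @AlgState R X xi0 xi0 x0 x0 0 0 0 0
  | n'.+1 => alg_step ipX ipY F Lstar gradRs sigma eta Lc mu0 mu1 rule beta delta yd n'
               (alg_state_at ipX ipY F Lstar gradRs sigma eta Lc mu0 mu1 rule beta xi0 x0 delta yd n')
  end.

Definition alg_x (R : realType) (X Y : lmodType R)
  (ipX : X -> X -> R) (ipY : Y -> Y -> R) (F : X -> Y) (Lstar : X -> Y -> X)
  (gradRs : X -> X) (sigma eta Lc mu0 mu1 : R) (rule : step_rule)
  (beta : option R) (xi0 x0 : X) (delta : R) (yd : Y) (n : nat) : X :=
  st_x (alg_state_at ipX ipY F Lstar gradRs sigma eta Lc mu0 mu1 rule beta xi0 x0 delta yd n).

Definition is_stop_index (R : realType) (X Y : lmodType R)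
  (ipX : X -> X -> R) (ipY : Y -> Y -> R) (F : X -> Y) (Lstar : X -> Y -> X)
  (gradRs : X -> X) (sigma eta Lc mu0 mu1 : R) (rule : step_rule)
  (beta : option R) (xi0 x0 : X) (tau delta : R) (yd : Y) (n : nat) : Prop :=
  let xs := alg_x ipX ipY F Lstar gradRs sigma eta Lc mu0 mu1 rule beta xi0 x0 delta yd in
  hnorm ipY (F (xs n) - yd) <= tau * delta /\
  forall m : nat, (m < n)%N -> tau * delta < hnorm ipY (F (xs m) - yd).

(* Main.v *)
Require Import Defs.
From HB Require Import structures.
From mathcomp Require Import all_boot all_order all_algebra.
From mathcomp Require Import reals.
From mathcomp Require Import boolp classical_sets.
From mathcomp Require Import ring lra.
From Stdlib Require Import ClassicalEpsilon Classical.
Import Order.TTheory GRing.Theory Num.Theory.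
Set Implicit Arguments. Unset Strict Implicit. Unset Printing Implicit Defensive.
Local Open Scope ring_scope.


Lemma discr (R : realType) (a b c : R) : 0 <= c ->
  (forall t, 0 <= a + 2 * b * t + c * t ^+ 2) -> b ^+ 2 <= a * c.
Proof.
move=> c0 H.
have a0 : 0 <= a by have := H 0; rewrite !mulr0 expr0n /= mulr0 !addr0.
have [ce|cpos] := eqVneq c 0; first rewrite ce in H *.
  have [b0|bn0] := eqVneq b 0; first by rewrite b0 expr0n /= mulr0.
  have := H (- (a + 1) / (2 * b)).
  have -> : a + 2 * b * (- (a + 1) / (2 * b)) + 0 * (- (a + 1) / (2 * b)) ^+ 2 = -1.
    by field; rewrite bn0.
  by rewrite lerNr oppr0 ler10.
have cp : 0 < c by rewrite lt_def cpos c0.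
have := H (- b / c).
have -> : a + 2 * b * (- b / c) + c * (- b / c) ^+ 2 = a - b ^+ 2 / c.
  by field; rewrite cpos.
rewrite subr_ge0 ler_pdivrMr //.
Qed.


Lemma ipC (R : realType) (X : lmodType R) (ip : X -> X -> R) :
  is_inner_product ip -> forall x y, ip x y = ip y x.
Proof. by case. Qed.

Lemma ipDZl (R : realType) (X : lmodType R) (ip : X -> X -> R) :
  is_inner_product ip -> forall a x y z, ip (a *: x + y) z = a * ip x z + ip y z.
Proof. by case=> _ []. Qed.

Lemma ip0l (R : realType) (X : lmodType R) (ip : X -> X -> R) :
  is_inner_product ip -> forall z, ip 0 z = 0.
Proof.
move=> H z; have := ipDZl H 1 0 0 z.
rewrite scaler0 addr0 mul1r; lra.
Qed.

Lemma ipDl (R : realType) (X : lmodType R) (ip : X -> X -> R) :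
  is_inner_product ip -> forall x y z, ip (x + y) z = ip x z + ip y z.
Proof. by move=> H x y z; rewrite -[x]scale1r ipDZl // mul1r scale1r. Qed.

Lemma ipZl (R : realType) (X : lmodType R) (ip : X -> X -> R) :
  is_inner_product ip -> forall a x z, ip (a *: x) z = a * ip x z.
Proof. by move=> H a x z; rewrite -[a *: x]addr0 ipDZl // ip0l // addr0. Qed.

Lemma ipNl (R : realType) (X : lmodType R) (ip : X -> X -> R) :
  is_inner_product ip -> forall x z, ip (- x) z = - ip x z.
Proof. by move=> H x z; rewrite -scaleN1r ipZl // mulN1r. Qed.

Lemma ipBl (R : realType) (X : lmodType R) (ip : X -> X -> R) :
  is_inner_product ip -> forall x y z, ip (x - y) z = ip x z - ip y z.
Proof. by move=> H x y z; rewrite ipDl // ipNl. Qed.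

Lemma ipDr (R : realType) (X : lmodType R) (ip : X -> X -> R) :
  is_inner_product ip -> forall x y z, ip z (x + y) = ip z x + ip z y.
Proof. by move=> H x y z; rewrite !(ipC H z) ipDl. Qed.

Lemma ipZr (R : realType) (X : lmodType R) (ip : X -> X -> R) :
  is_inner_product ip -> forall a x z, ip z (a *: x) = a * ip z x.
Proof. by move=> H a x z; rewrite !(ipC H z) ipZl. Qed.

Lemma ipNr (R : realType) (X : lmodType R) (ip : X -> X -> R) :
  is_inner_product ip -> forall x z, ip z (- x) = - ip z x.
Proof. by move=> H x z; rewrite !(ipC H z) ipNl. Qed.

Lemma ipBr (R : realType) (X : lmodType R) (ip : X -> X -> R) :
  is_inner_product ip -> forall x y z, ip z (x - y) = ip z x - ip z y.
Proof. by move=> H x y z; rewrite ipDr // ipNr. Qed.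

Lemma ip0r (R : realType) (X : lmodType R) (ip : X -> X -> R) :
  is_inner_product ip -> forall z, ip z 0 = 0.
Proof. by move=> H z; rewrite ipC // ip0l. Qed.

Lemma ip_ge0 (R : realType) (X : lmodType R) (ip : X -> X -> R) :
  is_inner_product ip -> forall x, 0 <= ip x x.
Proof. by case=> _ [] _ []. Qed.

Lemma ip_eq0 (R : realType) (X : lmodType R) (ip : X -> X -> R) :
  is_inner_product ip -> forall x, ip x x = 0 -> x = 0.
Proof. by case=> _ [] _ []. Qed.

Lemma hnorm_ge0 (R : realType) (X : lmodType R) (ip : X -> X -> R) x :
  0 <= hnorm ip x.
Proof. exact: sqrtr_ge0. Qed.

Lemma hnorm_sq (R : realType) (X : lmodType R) (ip : X -> X -> R) :
  is_inner_product ip -> forall x, hnorm ip x ^+ 2 = ip x x.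
Proof. by move=> H x; rewrite /hnorm sqr_sqrtr // ip_ge0. Qed.

Lemma hnorm_eq0 (R : realType) (X : lmodType R) (ip : X -> X -> R) :
  is_inner_product ip -> forall x, hnorm ip x = 0 -> x = 0.
Proof. by move=> H x h; apply: (ip_eq0 H); rewrite -hnorm_sq // h expr0n. Qed.

Lemma hnorm0 (R : realType) (X : lmodType R) (ip : X -> X -> R) :
  is_inner_product ip -> hnorm ip 0 = 0.
Proof. by move=> H; rewrite /hnorm ip0l // sqrtr0. Qed.

Lemma ip_expand (R : realType) (X : lmodType R) (ip : X -> X -> R) :
  is_inner_product ip -> forall x y,
  ip (x + y) (x + y) = ip x x + 2 * ip x y + ip y y.
Proof.
move=> H x y; rewrite !ipDl // !ipDr // (ipC H y x); ring.
Qed.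

Lemma ip_expandB (R : realType) (X : lmodType R) (ip : X -> X -> R) :
  is_inner_product ip -> forall x y,
  ip (x - y) (x - y) = ip x x - 2 * ip x y + ip y y.
Proof.
move=> H x y; rewrite ip_expand // ipNr // ipNl // ipNr // opprK; ring.
Qed.

Lemma CS2 (R : realType) (X : lmodType R) (ip : X -> X -> R) :
  is_inner_product ip -> forall x y, ip x y ^+ 2 <= ip x x * ip y y.
Proof.
move=> H x y; apply: discr; first exact: ip_ge0.
move=> t; have := ip_ge0 H (x + t *: y).
rewrite ip_expand // ipZr // ipZl // ipZr //; lra.
Qed.

Lemma CS (R : realType) (X : lmodType R) (ip : X -> X -> R) :
  is_inner_product ip -> forall x y, `|ip x y| <= hnorm ip x * hnorm ip y.
Proof.
move=> H x y; rewrite /hnorm -sqrtrM ?ip_ge0 // -sqrtr_sqr.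
by rewrite ler_sqrt ?mulr_ge0 ?ip_ge0 // CS2.
Qed.

Lemma ip_le (R : realType) (X : lmodType R) (ip : X -> X -> R) :
  is_inner_product ip -> forall x y, ip x y <= hnorm ip x * hnorm ip y.
Proof. by move=> H x y; apply: le_trans (CS H x y); apply: ler_norm. Qed.

Lemma sq_le (R : realType) (a b : R) : 0 <= b -> a ^+ 2 <= b ^+ 2 -> a <= b.
Proof.
move=> b0 h; have : `|a| <= b by rewrite -(ler_pXn2r (_ : (0 < 2)%N)) ?nnegrE ?normr_ge0 // real_normK ?num_real.
by apply: le_trans; apply: ler_norm.
Qed.

Lemma hnorm_le (R : realType) (X : lmodType R) (ip : X -> X -> R) :
  is_inner_product ip -> forall x c, 0 <= c -> ip x x <= c ^+ 2 -> hnorm ip x <= c.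
Proof. by move=> H x c c0 h; apply: sq_le => //; rewrite hnorm_sq. Qed.

Lemma hnormD (R : realType) (X : lmodType R) (ip : X -> X -> R) :
  is_inner_product ip -> forall x y, hnorm ip (x + y) <= hnorm ip x + hnorm ip y.
Proof.
move=> H x y; apply: hnorm_le => //; first by rewrite addr_ge0 ?hnorm_ge0.
rewrite ip_expand // sqrrD !hnorm_sq //.
have := ip_le H x y; lra.
Qed.

Lemma hnormZ (R : realType) (X : lmodType R) (ip : X -> X -> R) :
  is_inner_product ip -> forall a x, hnorm ip (a *: x) = `|a| * hnorm ip x.
Proof.
move=> H a x; rewrite /hnorm ipZl // ipZr // mulrA -expr2 sqrtrM ?sqr_ge0 //.
by rewrite sqrtr_sqr.
Qed.

Lemma hnormN (R : realType) (X : lmodType R) (ip : X -> X -> R) :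
  is_inner_product ip -> forall x, hnorm ip (- x) = hnorm ip x.
Proof. by move=> H x; rewrite -scaleN1r hnormZ // normrN normr1 mul1r. Qed.

Lemma hnormB (R : realType) (X : lmodType R) (ip : X -> X -> R) :
  is_inner_product ip -> forall x y, hnorm ip (x - y) = hnorm ip (y - x).
Proof. by move=> H x y; rewrite -hnormN // opprB. Qed.

Lemma hnormBD (R : realType) (X : lmodType R) (ip : X -> X -> R) :
  is_inner_product ip -> forall x y z, hnorm ip (x - z) <= hnorm ip (x - y) + hnorm ip (y - z).
Proof.
move=> H x y z; have -> : x - z = (x - y) + (y - z) by rewrite addrA subrK.
exact: hnormD.
Qed.


Lemma subseq_ex (P : nat -> nat -> Prop) :
  (forall k N, exists n, (N <= n)%N /\ P k n) ->
  exists s : nat -> nat, (forall k, (s k < s k.+1)%N) /\ forall k, P k (s k).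
Proof.
move=> H.
have h : forall k N, {n | (N <= n)%N /\ P k n}.
  by move=> k N; apply: constructive_indefinite_description; apply: H.
pose s := fix s k := match k with
  | 0%N => proj1_sig (h 0%N 0%N)
  | k'.+1 => proj1_sig (h k'.+1 (s k').+1) end.
exists s; split.
  by move=> k; rewrite /=; case: (h k.+1 (s k).+1) => n [].
by case=> [|k] /=; [case: (h 0%N 0%N) => n [] | case: (h k.+1 _) => n []].
Qed.

Lemma incr_ge (s : nat -> nat) : (forall k, (s k < s k.+1)%N) -> forall k, (k <= s k)%N.
Proof.
move=> H; elim=> [//|k IH]; exact: leq_ltn_trans IH (H k).
Qed.

Lemma incr_lt (s : nat -> nat) : (forall k, (s k < s k.+1)%N) ->
  forall m n, (m < n)%N -> (s m < s n)%N.
Proof.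
move=> H m; elim=> [//|n IH]; rewrite ltnS leq_eqVlt => /orP[/eqP->|/IH h].
  exact: H.
exact: ltn_trans h (H n).
Qed.

Lemma incr_le (s : nat -> nat) : (forall k, (s k < s k.+1)%N) ->
  forall m n, (m <= n)%N -> (s m <= s n)%N.
Proof.
move=> H m n; rewrite leq_eqVlt => /orP[/eqP->//|/(incr_lt H) h]; exact: ltnW.
Qed.

Lemma incr_comp (s t : nat -> nat) : (forall k, (s k < s k.+1)%N) ->
  (forall k, (t k < t k.+1)%N) -> forall k, (s (t k) < s (t k.+1))%N.
Proof. by move=> Hs Ht k; apply: incr_lt. Qed.

Lemma seq_cvg_unique (R : realType) (u : nat -> R) a b :
  seq_cvg u a -> seq_cvg u b -> a = b.
Proof.
move=> Ha Hb; apply/eqP; rewrite -subr_eq0; apply/eqP.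
apply/normr0_eq0/eqP; rewrite eq_le normr_ge0 andbT.
apply/ler_addgt0Pr => e e0; rewrite add0r.
have e2 : 0 < e / 2 by rewrite divr_gt0.
have [N1 H1] := Ha _ e2; have [N2 H2] := Hb _ e2.
have := H1 (maxn N1 N2) (leq_maxl _ _); have := H2 (maxn N1 N2) (leq_maxr _ _).
move: (u _) => v h2 h1.
have := ler_normB v a; have := ler_normB v b.
rewrite (distrC v a) => h3 h4.
have : `|a - b| <= `|a - v| + `|v - b| by have := ler_normD (a - v) (v - b); rewrite addrA subrK.
rewrite (distrC a v); lra.
Qed.

Lemma seq_cvg_sub (R : realType) (u : nat -> R) l (k : nat -> nat) :
  (forall n, (n <= k n)%N) -> seq_cvg u l -> seq_cvg (fun n => u (k n)) l.
Proof.
move=> hk H e e0; have [N HN] := H e e0; exists N => n Nn.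
by apply: HN; apply: leq_trans Nn (hk n).
Qed.

Lemma seq_cvg_ext (R : realType) (u v : nat -> R) l :
  (forall n, u n = v n) -> seq_cvg u l -> seq_cvg v l.
Proof. by move=> h H e e0; have [N HN] := H e e0; exists N => n /HN; rewrite h. Qed.

Lemma seq_cvg_cst (R : realType) (c : R) : seq_cvg (fun _ => c) c.
Proof. by move=> e e0; exists 0%N => n _; rewrite subrr normr0. Qed.

Lemma seq_cvgD (R : realType) (u v : nat -> R) a b :
  seq_cvg u a -> seq_cvg v b -> seq_cvg (fun n => u n + v n) (a + b).
Proof.
move=> Ha Hb e e0.
have e2 : 0 < e / 2 by rewrite divr_gt0.
have [N1 H1] := Ha _ e2; have [N2 H2] := Hb _ e2.
exists (maxn N1 N2) => n; rewrite geq_max => /andP[n1 n2].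
have := H1 _ n1; have := H2 _ n2.
have := ler_normD (u n - a) (v n - b).
have -> : u n - a + (v n - b) = u n + v n - (a + b) by ring.
lra.
Qed.

Lemma seq_cvgM (R : realType) (u : nat -> R) a c :
  seq_cvg u a -> seq_cvg (fun n => c * u n) (c * a).
Proof.
move=> Ha e e0.
have e2 : 0 < e / (`|c| + 1) by rewrite divr_gt0 // ltr_wpDl.
have [N H] := Ha _ e2; exists N => n /H h.
rewrite -mulrBr normrM.
have c1 : 0 < `|c| + 1 by rewrite ltr_wpDl.
apply: (@le_lt_trans _ _ (`|c| * (e / (`|c| + 1)))).
  by apply: ler_wpM2l => //; apply: ltW.
rewrite mulrA ltr_pdivrMr // mulrDr mulr1; have := normr_ge0 c; nra.
Qed.

Lemma seq_cvgB (R : realType) (u v : nat -> R) a b :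
  seq_cvg u a -> seq_cvg v b -> seq_cvg (fun n => u n - v n) (a - b).
Proof.
move=> Ha Hb; have := seq_cvgD Ha (seq_cvgM (-1) Hb).
by rewrite mulN1r; apply: seq_cvg_ext => n; rewrite mulN1r.
Qed.

Lemma seq_cvg_le (R : realType) (u : nat -> R) l c :
  (forall n, u n <= c) -> seq_cvg u l -> l <= c.
Proof.
move=> h H; rewrite leNgt; apply/negP => cl.
have lc : 0 < l - c by rewrite subr_gt0.
have [N HN] := H (l - c) lc.
have := HN N (leqnn N); have := h N; have := ler_norm (l - u N).
rewrite distrC; lra.
Qed.

Lemma seq_cvg_ge (R : realType) (u : nat -> R) l c :
  (forall n, c <= u n) -> seq_cvg u l -> c <= l.
Proof.
move=> h H; rewrite -lerN2; apply: (@seq_cvg_le _ (fun n => - u n)).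
  by move=> n; rewrite lerN2.
have := seq_cvgM (-1) H; rewrite mulN1r; apply: seq_cvg_ext => n; by rewrite mulN1r.
Qed.

Lemma seq_cvg_squeeze (R : realType) (u v : nat -> R) l :
  (forall n, `|u n - l| <= v n) -> seq_cvg v 0 -> seq_cvg u l.
Proof.
move=> h H e e0; have [N HN] := H e e0; exists N => n /HN.
rewrite subr0 => h2; apply: le_lt_trans (h n) _.
by apply: le_lt_trans (ler_norm _) h2.
Qed.

Lemma cluster_sub (R : realType) (a : nat -> R) c :
  (forall e, 0 < e -> forall N, exists n, (N <= n)%N /\ `|a n - c| < e) ->
  exists s, (forall k, (s k < s k.+1)%N) /\ seq_cvg (fun k => a (s k)) c.
Proof.
move=> H.
have hk : forall k : nat, 0 < k.+1%:R^-1 :> R by move=> k; rewrite invr_gt0 ltr0Sn.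
have [s [Hs Hp]] := @subseq_ex (fun k n => `|a n - c| < k.+1%:R^-1)
  (fun k N => H _ (hk k) N).
exists s; split => // e e0.
have [K HK] := ltr_add_invr e0; rewrite add0r in HK.
exists K => k Kk; apply: lt_trans (Hp k) _; apply: le_lt_trans HK.
rewrite lef_pV2 ?posrE ?ltr0Sn // ler_nat; by [].
Qed.

Lemma BW (R : realType) (a : nat -> R) M : (forall n, `|a n| <= M) ->
  exists s, (forall k, (s k < s k.+1)%N) /\ exists c, seq_cvg (fun k => a (s k)) c.
Proof.
move=> hM.
pose S N := fun x : R => exists n, (N <= n)%N /\ x = a n.
pose sN N := sup (S N).
have hS : forall N, has_sup (S N).
  move=> N; split; first by exists (a N); exists N.
  exists M => x [n [_ ->]]; apply: le_trans (ler_norm _) (hM n).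
have sNge : forall N n, (N <= n)%N -> a n <= sN N.
  by move=> N n Nn; apply: sup_upper_bound (hS N) _ _; exists n.
have sNmono : forall N N', (N <= N')%N -> sN N' <= sN N.
  move=> N N' NN; apply: ge_sup; first by exists (a N'); exists N'.
  move=> x [n [Nn ->]]; apply: sNge; exact: leq_trans NN Nn.
pose T := fun x : R => exists N, x = sN N.
have hT : has_inf T.
  split; first by exists (sN 0%N); exists 0%N.
  exists (- M) => x [N ->]; apply: le_trans (sNge N N (leqnn N)).
  by have := hM N; rewrite ler_norml => /andP[].
pose c := inf T.
have cle : forall N, c <= sN N by move=> N; apply: ge_inf hT.2 _ _; exists N.
have clus : forall e, 0 < e -> forall N, exists n, (N <= n)%N /\ `|a n - c| < e.
  move=> e e0 N.
  have [x [N2 ->] hx] := inf_adherent e0 hT.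
  have [x' [n [Nn ->]] hx'] := sup_adherent e0 (hS (maxn N N2)).
  exists n; split; first by apply: leq_trans Nn; apply: leq_maxl.
  have h1 := sNmono _ _ (leq_maxr N N2).
  have h2 := sNge _ _ Nn.
  have h3 := cle (maxn N N2).
  rewrite ltr_norml; apply/andP; split; rewrite /sN in h1 h2 h3 hx hx' *; lra.
have [s [Hs Hc]] := cluster_sub clus.
by exists s; split => //; exists c.
Qed.

Lemma cauchy_cvg (R : realType) (a : nat -> R) M : (forall n, `|a n| <= M) ->
  (forall e, 0 < e -> exists N, forall m n, (N <= m)%N -> (N <= n)%N -> `|a m - a n| < e) ->
  exists c, seq_cvg a c.
Proof.
move=> hM hC; have [s [Hs [c Hc]]] := BW hM.
exists c => e e0; have e2 : 0 < e / 2 by rewrite divr_gt0.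
have [N HN] := hC _ e2; have [K HK] := Hc _ e2.
exists N => n Nn.
have h1 := HK (maxn N K) (leq_maxr _ _).
have h2 := HN n (s (maxn N K)) Nn (leq_trans (leq_maxl N K) (incr_ge Hs _)).
have := ler_normD (a n - a (s (maxn N K))) (a (s (maxn N K)) - c).
rewrite addrA subrK; lra.
Qed.


Lemma abs_lt_sq (R : realType) (a e : R) : 0 < e -> a ^+ 2 < e ^+ 2 -> `|a| < e.
Proof.
move=> e0 h; rewrite ltNge; apply/negP => h2.
have : e ^+ 2 <= `|a| ^+ 2 by rewrite !expr2; apply: ler_pM => //; apply: ltW.
by rewrite real_normK ?num_real //; rewrite leNgt h.
Qed.

Lemma approx_min (R : realType) (T : Type) (P : T -> Prop) (Phi : T -> R) :
  (exists w, P w) -> (exists m, forall w, P w -> m <= Phi w) ->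
  exists D, (forall w, P w -> D <= Phi w) /\
    forall e, 0 < e -> exists w, P w /\ Phi w < D + e.
Proof.
move=> [w0 Pw0] [m Hm].
pose E := fun r : R => exists w, P w /\ r = Phi w.
have hE : has_inf E.
  split; first by exists (Phi w0); exists w0.
  by exists m => r [w [Pw ->]]; apply: Hm.
exists (inf E); split.
  by move=> w Pw; apply: ge_inf hE.2 _ _; exists w.
move=> e e0; have [r [w [Pw ->]] h] := inf_adherent e0 hE.
by exists w.
Qed.

Lemma diag (R : realType) (b : nat -> nat -> R) M : (forall j n, `|b j n| <= M) ->
  exists psi, (forall k, (psi k < psi k.+1)%N) /\
    forall j, exists c, seq_cvg (fun n => b j (psi n)) c.
Proof.
move=> hM.
have h : forall (j : nat) (f : nat -> nat), {s | (forall k, (s k < s k.+1)%N) /\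
    exists c, seq_cvg (fun k => b j (f (s k))) c}.
  move=> j f; apply: constructive_indefinite_description.
  by apply: (@BW _ (fun n => b j (f n)) M).
pose g j f := proj1_sig (h j f).
have gi : forall j f k, (g j f k < g j f k.+1)%N by move=> j f; case: (proj2_sig (h j f)).
have gc : forall j f, exists c, seq_cvg (fun k => b j (f (g j f k))) c.
  by move=> j f; case: (proj2_sig (h j f)).
pose phi := fix phi j := match j with
  | 0%N => fun n : nat => n
  | j'.+1 => fun n => phi j' (g j' (phi j') n) end.
have phi_S : forall j n, phi j.+1 n = phi j (g j (phi j) n) by [].
have phi_i : forall j k, (phi j k < phi j k.+1)%N.
  elim=> [//|j IH] k; rewrite !phi_S; apply: incr_lt => //.
have phi_rep : forall j d i, exists k, (i <= k)%N /\ phi (d + j)%N i = phi j k.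
  move=> j; elim=> [|d IH] i; first by exists i.
  rewrite addSn phi_S; have [k [ik ->]] := IH (g (d + j)%N (phi (d + j)%N) i).
  by exists k; split => //; apply: leq_trans ik; apply: incr_ge.
exists (fun n => phi n.+1 n); split.
  move=> n; rewrite (phi_S n.+1); apply: incr_lt => //.
  by apply: leq_trans (incr_ge (gi _ _) _).
move=> j; have [c Hc] := gc j (phi j); exists c => e e0.
have [N HN] := Hc e e0; exists (maxn N j.+1) => n; rewrite geq_max => /andP[Nn jn].
have [k [nk hk]] := phi_rep j.+1 (n - j)%N n.
have e1 : ((n - j) + j.+1 = n.+1)%N by rewrite addnS subnK // ltnW.
rewrite e1 in hk; rewrite hk phi_S; apply: HN; exact: leq_trans Nn nk.
Qed.

Inductive inspan (R : realType) (X : lmodType R) (u : nat -> X) : X -> Prop :=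
  | sp0 : inspan u 0
  | spS j (a : R) w : inspan u w -> inspan u (a *: u j + w).

Lemma inspanD (R : realType) (X : lmodType R) (u : nat -> X) w1 w2 :
  inspan u w1 -> inspan u w2 -> inspan u (w1 + w2).
Proof.
elim=> [|j a w _ IH] h2; first by rewrite add0r.
by rewrite -addrA; apply: spS; apply: IH.
Qed.

Lemma inspanZ (R : realType) (X : lmodType R) (u : nat -> X) (c : R) w :
  inspan u w -> inspan u (c *: w).
Proof.
elim=> [|j a w' _ IH]; first by rewrite scaler0; apply: sp0.
by rewrite scalerDr scalerA; apply: spS.
Qed.

Lemma inspan_u (R : realType) (X : lmodType R) (u : nat -> X) j : inspan u (u j).
Proof. by rewrite -[u j]addr0 -[u j]scale1r; apply: spS; apply: sp0. Qed.

Lemma weak_pre (R : realType) (X : lmodType R) (ip : X -> X -> R) :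
  is_inner_product ip -> forall (u v : nat -> X) M,
  (forall n, inspan u (v n)) -> (forall n, hnorm ip (v n) <= M) ->
  (forall j, exists c, seq_cvg (fun n => ip (v n) (u j)) c) ->
  forall z, exists c, seq_cvg (fun n => ip (v n) z) c.
Proof.
move=> H u v M vs vM vc.
have M0 : 0 <= M by apply: le_trans (vM 0%N); apply: hnorm_ge0.
have spc : forall w, inspan u w -> exists c, seq_cvg (fun n => ip (v n) w) c.
  move=> w; elim=> [|j a w0 _ [c IH]].
    by exists 0; apply: seq_cvg_ext (seq_cvg_cst 0) => n; rewrite ip0r.
  have [cj Hj] := vc j; exists (a * cj + c).
  apply: seq_cvg_ext (seq_cvgD (seq_cvgM a Hj) IH) => n.
  by rewrite ipDr // ipZr.
move=> z.
have [D [HD1 HD2]] : exists D, (forall w, inspan u w -> D <= ip (z - w) (z - w)) /\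
    forall e, 0 < e -> exists w, inspan u w /\ ip (z - w) (z - w) < D + e.
  apply: approx_min; first by exists 0; apply: sp0.
  by exists 0 => w _; apply: ip_ge0.
have key : forall eps, 0 < eps -> exists w, inspan u w /\
    forall w', inspan u w' -> ip (z - w) w' ^+ 2 <= eps * ip w' w'.
  move=> eps eps0; have [w [Pw Hw]] := HD2 eps eps0; exists w; split => // w' Pw'.
  have := discr (a := eps) (b := - ip (z - w) w') (c := ip w' w') (ip_ge0 H w').
  rewrite sqrrN; apply => t.
  have := HD1 (w + t *: w') (inspanD Pw (inspanZ t Pw')).
  have -> : z - (w + t *: w') = (z - w) - t *: w' by rewrite opprD addrA.
  rewrite ip_expandB // ipZr // ipZr // ipZl //; lra.
have vM2 : forall n, ip (v n) (v n) <= M ^+ 2.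
  by move=> n; rewrite -hnorm_sq //; have := vM n; have := hnorm_ge0 ip (v n); nra.
apply: (@cauchy_cvg _ _ (M * hnorm ip z)).
  by move=> n; apply: le_trans (CS H _ _) _; apply: ler_wpM2r; rewrite ?hnorm_ge0.
move=> e e0.
have e3 : 0 < e / 3 by rewrite divr_gt0.
have epos : 0 < (e / 3) ^+ 2 / (M ^+ 2 + 1).
  by rewrite divr_gt0 ?exprn_gt0 // ltr_wpDl ?sqr_ge0.
have [w [Pw Hw]] := key _ epos.
have small : forall n, `|ip (v n) (z - w)| < e / 3.
  move=> n; apply: abs_lt_sq => //; rewrite ipC //.
  apply: le_lt_trans (Hw _ (vs n)) _.
  have := vM2 n; have := ip_ge0 H (v n); move: (ip (v n) (v n)) => q q0 qM.
  have K0 : 0 < M ^+ 2 + 1 by rewrite ltr_wpDl ?sqr_ge0.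
  rewrite mulrAC ltr_pdivrMr //.
  have : 0 < (e / 3) ^+ 2 by rewrite exprn_gt0.
  move: ((e / 3) ^+ 2) => E E0; nra.
have e6 : 0 < e / 3 / 2 by rewrite divr_gt0.
have [cw Hcw] := spc w Pw; have [N HN] := Hcw _ e6.
exists N => m n Nm Nn.
have h1 := small m; have h2 := small n; have h3 := HN _ Nm; have h4 := HN _ Nn.
rewrite !ipBr // in h1 h2.
move: (ip (v m) z) (ip (v n) z) (ip (v m) w) (ip (v n) w) h1 h2 h3 h4 => a b c d.
move=> /ltr_normlP [h1 h1'] /ltr_normlP [h2 h2'] /ltr_normlP [h3 h3'] /ltr_normlP [h4 h4'].
apply/ltr_normlP; split; lra.
Qed.

Lemma eps_small (R : realType) (a : R) : 0 < a -> exists K : nat,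
  forall j, (K <= j)%N -> j.+1%:R^-1 < a.
Proof.
move=> a0; have [K HK] := ltr_add_invr a0; rewrite add0r in HK.
exists K => j Kj; apply: le_lt_trans HK.
by rewrite lef_pV2 ?posrE ?ltr0Sn // ler_nat.
Qed.

Lemma riesz_lim (R : realType) (X : lmodType R) (ip : X -> X -> R) :
  is_hilbert ip -> forall (v : nat -> X) M, (forall n, hnorm ip (v n) <= M) ->
  (forall z, exists c, seq_cvg (fun n => ip (v n) z) c) ->
  exists l, weak_cvg ip v l.
Proof.
move=> [H Hc] v M vM vc.
have M0 : 0 <= M by apply: le_trans (vM 0%N); apply: hnorm_ge0.
have hf : forall z, {c | seq_cvg (fun n => ip (v n) z) c}.
  by move=> z; apply: constructive_indefinite_description.
pose f z := proj1_sig (hf z).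
have fP : forall z, seq_cvg (fun n => ip (v n) z) (f z) by move=> z; exact: proj2_sig (hf z).
have fL : forall a x y, f (a *: x + y) = a * f x + f y.
  move=> a x y; apply: seq_cvg_unique (fP _) _.
  apply: seq_cvg_ext (seq_cvgD (seq_cvgM a (fP x)) (fP y)) => n.
  by rewrite ipDr // ipZr.
have f0 : f 0 = 0.
  apply: seq_cvg_unique (fP _) _.
  by apply: seq_cvg_ext (seq_cvg_cst 0) => n; rewrite ip0r.
have fD : forall x y, f (x + y) = f x + f y.
  by move=> x y; rewrite -[x in LHS]scale1r fL mul1r.
have fZ : forall a x, f (a *: x) = a * f x.
  by move=> a x; rewrite -[a *: x]addr0 fL f0 addr0.
have fB : forall z, f z <= M * hnorm ip z.
  move=> z; apply: seq_cvg_le (fP z) => n.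
  apply: le_trans (ip_le H _ _) _; apply: ler_wpM2r; rewrite ?hnorm_ge0 //.
pose Phi w := ip w w - 2 * f w.
have [D [HD1 HD2]] : exists D, (forall w, True -> D <= Phi w) /\
    forall e, 0 < e -> exists w, True /\ Phi w < D + e.
  apply: approx_min; first by exists 0.
  exists (- M ^+ 2) => w _; rewrite /Phi -hnorm_sq //.
  have := fB w; have := sqr_ge0 (hnorm ip w - M); rewrite sqrrB; lra.
have hw : forall j : nat, {w | Phi w < D + j.+1%:R^-1}.
  move=> j; apply: constructive_indefinite_description.
  have hj : 0 < j.+1%:R^-1 :> R by rewrite invr_gt0 ltr0Sn.
  have [w [_ Hw]] := HD2 _ hj; by exists w.
pose w j := proj1_sig (hw j).
have wP : forall j, Phi (w j) < D + j.+1%:R^-1 by move=> j; exact: proj2_sig (hw j).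
have wC : cauchy_seq ip w.
  move=> e e0; have e4 : 0 < e ^+ 2 / 4 by rewrite divr_gt0 ?exprn_gt0.
  have [K HK] := eps_small e4; exists K => m n Km Kn.
  have hm := HK _ Km; have hn := HK _ Kn.
  have hmid := HD1 (2^-1 *: (w m + w n)) I.
  have := wP m; have := wP n.
  rewrite /Phi fZ fD ipZl // ipZr // in hmid *.
  have ex1 := ip_expand H (w m) (w n); have ex2 := ip_expandB H (w m) (w n).
  move=> h1 h2.
  rewrite -[hnorm _ _]ger0_norm ?hnorm_ge0 //; apply: abs_lt_sq => //.
  rewrite hnorm_sq //.
  have e4' : 4 * D <= ip (w m + w n) (w m + w n) - 4 * (f (w m) + f (w n)).
    move: hmid; set S := ip _ _; set T := (f _ + f _).
    have -> : 2^-1 * (2^-1 * S) - 2 * (2^-1 * T) = (S - 4 * T) / 4 by field.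
    by rewrite ler_pdivlMr // mulrC.
  have : ip (w m - w n) (w m - w n) < 2 * m.+1%:R^-1 + 2 * n.+1%:R^-1.
    move: e4' h1 h2; rewrite ex2 ex1; set em := m.+1%:R^-1; set en := n.+1%:R^-1; lra.
  move: hm hn; set em := m.+1%:R^-1; set en := n.+1%:R^-1; set q := e ^+ 2 / 4.
  have -> : e ^+ 2 = 4 * q by rewrite /q; field.
  lra.
have [l Hl] := Hc w wC.
exists l => z.
have c1 : seq_cvg (fun j => ip (w j) z) (ip l z).
  apply: (@seq_cvg_squeeze _ _ (fun j => hnorm ip z * hnorm ip (w j - l))).
    by move=> j; rewrite -ipBl // mulrC; apply: CS.
  have := seq_cvgM (hnorm ip z) Hl; rewrite mulr0; exact.
have c2 : seq_cvg (fun j => ip (w j) z) (f z).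
  move=> e e0.
  have ee : 0 < e ^+ 2 / (ip z z + 1) by rewrite divr_gt0 ?exprn_gt0 // ltr_wpDl ?ip_ge0.
  have [K HK] := eps_small ee; exists K => j Kj.
  apply: abs_lt_sq => //.
  have d := discr (a := j.+1%:R^-1) (b := ip (w j) z - f z) (c := ip z z) (ip_ge0 H z).
  have : (ip (w j) z - f z) ^+ 2 <= j.+1%:R^-1 * ip z z.
    apply: d => t; have := HD1 (w j + t *: z) I; have := wP j.
    rewrite /Phi fD fZ ip_expand // ipZr // ipZl // ipZr //.
    set ej := j.+1%:R^-1; lra.
  move=> h; apply: le_lt_trans h _.
  have hj := HK _ Kj; have q0 := ip_ge0 H z.
  have K1 : 0 < ip z z + 1 by rewrite ltr_wpDl.
  rewrite ltr_pdivlMr // in hj.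
  have : 0 < e ^+ 2 by rewrite exprn_gt0.
  move: (j.+1%:R^-1) hj => s hs; move: (ip z z) q0 K1 hs => q q0 K1 hs.
  nra.
have -> : ip l z = f z by apply: seq_cvg_unique c1 c2.
exact: fP.
Qed.

Lemma weak_compact (R : realType) (X : lmodType R) (ip : X -> X -> R) :
  is_hilbert ip -> forall (u : nat -> X) M, (forall n, hnorm ip (u n) <= M) ->
  exists s, (forall k, (s k < s k.+1)%N) /\ exists l, weak_cvg ip (fun n => u (s n)) l.
Proof.
move=> HX u M uM; have H := HX.1.
have M0 : 0 <= M by apply: le_trans (uM 0%N); apply: hnorm_ge0.
have [psi [Hpsi Hc]] := @diag R (fun j n => ip (u n) (u j)) (M * M)
  (fun j n => le_trans (CS H _ _) (ler_pM (hnorm_ge0 _ _) (hnorm_ge0 _ _) (uM n) (uM j))).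
exists psi; split => //.
apply: (@riesz_lim _ _ _ HX _ M) => //.
apply: (@weak_pre _ _ _ H u) => //.
by move=> n; apply: inspan_u.
Qed.


Lemma bregman_lb (R : realType) (X : lmodType R) (ip : X -> X -> R) (domR : X -> Prop) (Rf : X -> R) (sigma : R) :
  is_inner_product ip -> 0 < sigma -> strongly_convex ip domR Rf sigma ->
  forall xi x z, subdiff ip domR Rf xi x -> domR z ->
  sigma * ip (z - x) (z - x) <= bregman ip Rf xi z x.
Proof.
move=> H s0 Hsc xi x z [dx Hsub] dz.
set d := ip (z - x) (z - x); set B := bregman ip Rf xi z x.
have d0 : 0 <= d by apply: ip_ge0.
have key : forall t, 0 < t <= 1 -> sigma * (1 - t) * d <= B.
  move=> t /andP[t0 t1].
  have ht : 0 <= t <= 1 by rewrite (ltW t0) t1.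
  have [dp Hp] := Hsc z x t dz dx ht.
  have hs := Hsub _ dp.
  have e : t *: z + (1 - t) *: x - x = t *: (z - x).
    by rewrite scalerBl scale1r scalerBr addrCA [x + _]addrC addrK.
  rewrite e ipZr // in hs.
  rewrite hnorm_sq // -/d in Hp.
  rewrite /B /bregman ipBr //; rewrite ipBr // in hs.
  have : t * (sigma * (1 - t) * d) <= t * (Rf z - Rf x - (ip xi z - ip xi x)) by nra.
  by rewrite ler_pM2l.
have B0 : 0 <= B by have := key 1; rewrite lexx ltr01 subrr mulr0 mul0r; apply.
rewrite leNgt; apply/negP => hB.
have sd : 0 < sigma * d by apply: le_lt_trans hB.
pose t := (sigma * d - B) / (2 * (sigma * d)).
have t0 : 0 < t by rewrite divr_gt0 ?subr_gt0 //; apply: mulr_gt0.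
have t1 : t <= (1 : R).
  have h : sigma * d - B <= 2 * (sigma * d) by lra.
  have s2 : 0 < 2 * (sigma * d) by apply: mulr_gt0.
  rewrite ler_pdivrMr //; rewrite -[X in _ <= X]mul1r in h. exact h.
have := key t; rewrite t0 t1 => /(_ isT).
have -> : sigma * (1 - t) * d = (sigma * d + B) / 2.
  rewrite /t; field.
  have sn : sigma != 0 by rewrite gt_eqF.
  have dn : d != 0 by apply/eqP => h0; move: sd; rewrite h0 mulr0 ltxx.
  by rewrite dn sn.
lra.
Qed.

Lemma gradRs_sub (R : realType) (X : lmodType R) (ip : X -> X -> R) (domR : X -> Prop) (Rf : X -> R) (gradRs : X -> X) :
  is_inner_product ip -> is_grad_conj ip domR Rf gradRs ->
  forall xi, subdiff ip domR Rf xi (gradRs xi).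
Proof.
move=> H Hg xi; have [d h] := Hg xi; split => // z dz.
have := h z dz; rewrite ipBr //; lra.
Qed.

Lemma conj_bound (R : realType) (X : lmodType R) (ip : X -> X -> R) (domR : X -> Prop) (Rf : X -> R) (sigma : R) (gradRs : X -> X) :
  is_inner_product ip -> 0 < sigma -> strongly_convex ip domR Rf sigma ->
  is_grad_conj ip domR Rf gradRs ->
  forall xi x xi', subdiff ip domR Rf xi x ->
  Rf x - Rf (gradRs xi') - ip xi' (x - gradRs xi') <=
    ip (xi' - xi) (xi' - xi) / (4 * sigma).
Proof.
move=> H s0 Hsc Hg xi x xi' hx.
have [d _] := Hg xi'.
have lb := bregman_lb H s0 Hsc hx d.
move: lb; rewrite /bregman.
set x' := gradRs xi'.
have hsq := ip_ge0 H ((xi' - xi) - (2 * sigma) *: (x' - x)).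
rewrite ip_expandB // ipZr // ipZl // ipZr // in hsq.
rewrite ler_pdivlMr ?mulr_gt0 //.
rewrite !ipBr // !ipBl // in hsq *.
rewrite (ipC H xi' x') (ipC H xi x) (ipC H xi x') (ipC H xi' x) in hsq *.
nra.
Qed.

Lemma lin0 (R : realType) (X Y : lmodType R) (L : X -> Y) :
  (forall a u v, L (a *: u + v) = a *: L u + L v) -> L 0 = 0.
Proof.
move=> h; have := h 1 0 0; rewrite scaler0 addr0 scale1r => e.
by have := congr1 (fun w => w - L 0) e; rewrite subrr addrK.
Qed.

Lemma linN (R : realType) (X Y : lmodType R) (L : X -> Y) :
  (forall a u v, L (a *: u + v) = a *: L u + L v) -> forall u, L (- u) = - L u.
Proof.
move=> h u; have := h (-1) u 0; rewrite addr0 (lin0 h) addr0 !scaleN1r; exact.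
Qed.

Lemma tang (R : realType) (X Y : lmodType R) (ipX : X -> X -> R) (ipY : Y -> Y -> R)
  (F : X -> Y) (L : X -> X -> Y) (Lstar : X -> Y -> X) (eta : R) x xh y yd (delta : R) :
  is_inner_product ipX -> is_inner_product ipY ->
  (forall a u v, L x (a *: u + v) = a *: L x u + L x v) ->
  hnorm ipY (F xh - F x - L x (xh - x)) <= eta * hnorm ipY (F xh - F x) ->
  (forall u v, ipY (L x u) v = ipX u (Lstar x v)) ->
  F xh = y -> hnorm ipY (yd - y) <= delta -> 0 <= eta ->
  (1 - eta) * hnorm ipY (F x - yd) ^+ 2 - (1 + eta) * delta * hnorm ipY (F x - yd)
   <= ipX (Lstar x (F x - yd)) (x - xh).
Proof.
move=> HX HY hlin htc hadj hy hd eta0.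
set r := F x - yd.
rewrite ipC // -hadj.
have hL : L x (x - xh) = (F xh - F x - L x (xh - x)) + (F x - y).
  have hneg : x - xh = - (xh - x) by rewrite opprB.
  rewrite hneg linN // hy (addrC (y - F x - _)) addrA.
  have -> : F x - y + (y - F x) = 0 by rewrite addrA subrK subrr.
  by rewrite add0r.
have hFy : F x - y = r + (yd - y) by rewrite /r addrA subrK.
rewrite hL (ipDl HY (F xh - F x - L x (xh - x))) hFy (ipDl HY r) -(hnorm_sq HY r).
have c1 : - (delta * hnorm ipY r) <= ipY (yd - y) r.
  have := CS HY (yd - y) r; rewrite ler_norml => /andP[h _].
  apply: le_trans h; rewrite lerN2; apply: ler_wpM2r => //; exact: hnorm_ge0.
have nFy : hnorm ipY (F xh - F x) <= hnorm ipY r + delta.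
  rewrite hy hnormB // hFy; apply: le_trans (hnormD HY _ _) _; exact: lerD.
have c2 : - (eta * (hnorm ipY r + delta) * hnorm ipY r) <= ipY (F xh - F x - L x (xh - x)) r.
  have := CS HY (F xh - F x - L x (xh - x)) r; rewrite ler_norml => /andP[h _].
  apply: le_trans h; rewrite lerN2; apply: ler_wpM2r; first exact: hnorm_ge0.
  apply: le_trans htc _; apply: ler_wpM2l => //.
have := hnorm_ge0 ipY r; have := hnorm_ge0 ipY (yd - y).
move: c1 c2; set q := hnorm ipY r; move: (ipY (F xh - F x - L x (xh - x)) r) (ipY (yd - y) r) => a b.
nra.
Qed.

Lemma Lstar_bound (R : realType) (X Y : lmodType R) (ipX : X -> X -> R) (ipY : Y -> Y -> R)
  (L : X -> X -> Y) (Lstar : X -> Y -> X) (Lc : R) x :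
  is_inner_product ipX -> is_inner_product ipY -> 0 < Lc ->
  (forall u, hnorm ipY (L x u) <= Lc * hnorm ipX u) ->
  (forall u v, ipY (L x u) v = ipX u (Lstar x v)) ->
  forall v, ipX (Lstar x v) (Lstar x v) <= Lc ^+ 2 * ipY v v.
Proof.
move=> HX HY Lc0 hb hadj v.
set w := Lstar x v.
have h1 : ipX w w <= Lc * hnorm ipX w * hnorm ipY v.
  rewrite -hadj; apply: le_trans (ip_le HY _ _) _; apply: ler_wpM2r => //.
  exact: hnorm_ge0.
rewrite -!hnorm_sq // in h1 *.
have := hnorm_ge0 ipX w; have := hnorm_ge0 ipY v.
move: h1; move: (hnorm ipX w) (hnorm ipY v) => a b h1 b0 a0.
have : a <= Lc * b.
  rewrite leNgt; apply/negP => h.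
  have lb : 0 <= Lc * b by rewrite mulr_ge0 // ltW.
  have ap : 0 < a by apply: le_lt_trans h.
  have hs : 0 < a - Lc * b by rewrite subr_gt0.
  have := mulr_gt0 hs ap.
  move: h1; rewrite expr2 mulrAC; move: (Lc * b) lb h hs => c _ _ _ h1 h2.
  have : a * a - c * a <= 0 by lra.
  have -> : a * a - c * a = (a - c) * a by ring.
  by rewrite leNgt h2.
nra.
Qed.

Definition alpha_of (R : realType) (X Y : lmodType R) (ipX : X -> X -> R) (ipY : Y -> Y -> R)
  (Lc mu0 mu1 : R) (rule : step_rule) (r : Y) (g : X) : R :=
  match rule with
  | ConstantStep => mu0 / Lc ^+ 2
  | AdaptiveStep => if g == 0 then mu1
                    else Order.min (mu0 * hnorm ipY r ^+ 2 / hnorm ipX g ^+ 2) mu1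
  end.

Lemma alpha_facts (R : realType) (X Y : lmodType R) (ipX : X -> X -> R) (ipY : Y -> Y -> R)
  (Lc mu0 mu1 : R) rule r g :
  is_inner_product ipX -> is_inner_product ipY -> 0 < Lc -> 0 < mu0 -> 0 < mu1 ->
  ipX g g <= Lc ^+ 2 * ipY r r ->
  let a := alpha_of ipX ipY Lc mu0 mu1 rule r g in
  0 < a /\ Order.min (mu0 / Lc ^+ 2) mu1 <= a /\ a * ipX g g <= mu0 * ipY r r.
Proof.
move=> HX HY Lc0 m0 m1 hg; rewrite /alpha_of.
have L2 : 0 < Lc ^+ 2 by rewrite exprn_gt0.
have r0 := ip_ge0 HY r; have g0 := ip_ge0 HX g.
case: rule.
  split; first by rewrite divr_gt0.
  split; first by rewrite ge_min lexx.
  rewrite mulrAC ler_pdivrMr //; have := ler_wpM2l (ltW m0) hg; nra.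
case: eqP => [->|gn].
  by rewrite ip0l // mulr0; split => //; split; [rewrite ge_min lexx orbT | rewrite mulr_ge0 // ltW].
rewrite !hnorm_sq //.
have gp : 0 < ipX g g by rewrite lt_def ip_ge0 // andbT; apply/eqP => /(ip_eq0 HX).
have rp : 0 < ipY r r.
  rewrite lt_def r0 andbT; apply/eqP => h; move: hg; rewrite h mulr0 => hg.
  by move: gp; rewrite ltNge hg.
split; first by rewrite lt_min m1 andbT divr_gt0 // mulr_gt0.
split.
  apply: le_min2 => //.
  rewrite ler_pdivlMr // mulrAC ler_pdivrMr //; have := ler_wpM2l (ltW m0) hg; nra.
have hmin : Order.min (mu0 * ipY r r / ipX g g) mu1 <= mu0 * ipY r r / ipX g g.
  by rewrite ge_min lexx.
apply: le_trans (ler_wpM2r g0 hmin) _.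
rewrite mulrAC -mulrA mulrV ?mulr1 ?unitfE //; exact: lt0r_neq0.
Qed.

Definition beta_of (R : realType) (X : lmodType R) (ipX : X -> X -> R) (beta : option R)
  (sigma alpha : R) (g m : X) (gam : R) : R :=
  if m == 0 then 0
  else cap_beta beta (Order.max 0 ((alpha * ipX g m - 2 * sigma * gam) / hnorm ipX m ^+ 2)).

Lemma beta_facts (R : realType) (X : lmodType R) (ipX : X -> X -> R) (beta : option R)
  (sigma alpha : R) (g m : X) (gam : R) :
  is_inner_product ipX -> 0 < sigma -> (forall b, beta = Some b -> 0 < b) ->
  let bt := beta_of ipX beta sigma alpha g m gam in
  0 <= bt /\
  ipX (- (alpha *: g) + bt *: m) (- (alpha *: g) + bt *: m) / (4 * sigma) + bt * gam
    <= alpha ^+ 2 * ipX g g / (4 * sigma).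
Proof.
move=> H s0 hb; rewrite /beta_of.
have s4 : 0 < 4 * sigma by rewrite mulr_gt0.
have expand : forall bt : R, ipX (- (alpha *: g) + bt *: m) (- (alpha *: g) + bt *: m) =
   alpha ^+ 2 * ipX g g - 2 * alpha * bt * ipX g m + bt ^+ 2 * ipX m m.
  move=> bt; rewrite ip_expand // !ipNl // !ipNr // !ipZl // !ipZr //; ring.
case: eqP => [->|mn].
  split => //; rewrite scaler0 addr0 mul0r addr0 ipNl // ipNr // opprK ipZl // ipZr //.
  by rewrite mulrA -expr2.
have mp : 0 < ipX m m by rewrite lt_def ip_ge0 // andbT; apply/eqP => /(ip_eq0 H).
rewrite hnorm_sq //.
set q := (alpha * ipX g m - 2 * sigma * gam) / ipX m m.
have [bt [bt0 btq]] : exists bt, 0 <= bt /\ bt <= Order.max 0 q /\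
    cap_beta beta (Order.max 0 q) = bt.
  exists (cap_beta beta (Order.max 0 q)); split; last split => //.
    case: beta hb => [b hb|_] /=; last by rewrite le_max lexx.
    by rewrite le_min le_max lexx /= ltW // hb.
  by case: beta hb => [b hb|_] //=; rewrite ge_min lexx.
case: btq => btq ->; split => //.
rewrite expand ler_pdivlMr // mulrDl divfK ?gt_eqF //.
suff : - 2 * alpha * bt * ipX g m + bt ^+ 2 * ipX m m + 4 * sigma * (bt * gam) <= 0.
  lra.
have [->|btp] := eqVneq bt 0; first by rewrite !(mulr0, mul0r, expr0n) /= !addr0 lexx.
have btp' : 0 < bt by rewrite lt_def btp bt0.
have hq : bt <= q.
  move: btq; rewrite le_max => /orP[|//]; by rewrite leNgt btp'.
have hq' : bt * ipX m m <= alpha * ipX g m - 2 * sigma * gam.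
  by rewrite -ler_pdivlMr.
have := ler_wpM2l bt0 hq'; nra.
Qed.

Definition gam_of (R : realType) (X : lmodType R) (ipX : X -> X -> R) (eta delta : R)
  (n : nat) (s : alg_state X) : R :=
  match n with
  | 0%N => 0
  | _.+1 => ipX (st_xi s - st_xip s) (st_x s - st_xp s)
            - (1 - eta) * st_ap s * st_rp s ^+ 2
            + (1 + eta) * st_ap s * delta * st_rp s
            + st_bp s * st_gp s
  end.

Lemma step_eqs (R : realType) (X Y : lmodType R)
  (ipX : X -> X -> R) (ipY : Y -> Y -> R) (F : X -> Y) (Lstar : X -> Y -> X)
  (gradRs : X -> X) (sigma eta Lc mu0 mu1 : R) (rule : step_rule)
  (beta : option R) (delta : R) (yd : Y) (n : nat) (s : alg_state X) :
  let s' := alg_step ipX ipY F Lstar gradRs sigma eta Lc mu0 mu1 rule beta delta yd n s in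
  let r := F (st_x s) - yd in let g := Lstar (st_x s) r in
  let a := alpha_of ipX ipY Lc mu0 mu1 rule r g in
  let gm := gam_of ipX eta delta n s in
  let b := beta_of ipX beta sigma a g (st_xi s - st_xip s) gm in
  [/\ st_xi s' = st_xi s - a *: g + b *: (st_xi s - st_xip s), st_xip s' = st_xi s,
      st_x s' = gradRs (st_xi s'), st_xp s' = st_x s &
      [/\ st_ap s' = a, st_rp s' = hnorm ipY r, st_bp s' = b & st_gp s' = gm]].
Proof. by []. Qed.

Lemma inv_step (R : realType) (X Y : lmodType R) (ipX : X -> X -> R) (ipY : Y -> Y -> R)
  (domR : X -> Prop) (Rf : X -> R) (sigma : R) (gradRs : X -> X)
  (F : X -> Y) (y : Y) (rho : R) (x0 xh : X)
  (L : X -> X -> Y) (Lstar : X -> Y -> X) (eta Lc : R)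
  (tau mu0 mu1 : R) (beta : option R) (rule : step_rule) (delta : R) (yd : Y) :
  is_inner_product ipX -> is_inner_product ipY -> 0 < sigma ->
  strongly_convex ipX domR Rf sigma -> is_grad_conj ipX domR Rf gradRs ->
  domR xh -> F xh = y -> hnorm ipX (xh - x0) <= 2 * rho ->
  (forall x, hnorm ipX (x - x0) <= 2 * rho ->
             forall (a : R) (u v : X), L x (a *: u + v) = a *: L x u + L x v) ->
  0 <= eta < 1 ->
  (forall x xb, hnorm ipX (x - x0) <= 2 * rho -> hnorm ipX (xb - x0) <= 2 * rho ->
             hnorm ipY (F x - F xb - L xb (x - xb)) <= eta * hnorm ipY (F x - F xb)) ->
  0 < Lc ->
  (forall x, hnorm ipX (x - x0) <= 2 * rho ->
             forall u, hnorm ipY (L x u) <= Lc * hnorm ipX u) ->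
  (forall x, hnorm ipX (x - x0) <= 2 * rho ->
             forall u v, ipY (L x u) v = ipX u (Lstar x v)) ->
  1 < tau -> (forall b, beta = Some b -> 0 < b) -> 0 < mu0 -> 0 < mu1 ->
  0 < 1 - (1 + eta) / tau - eta - mu0 / (4 * sigma) ->
  0 < delta -> hnorm ipY (yd - y) <= delta ->
  forall n (s : alg_state X),
  subdiff ipX domR Rf (st_xi s) (st_x s) -> hnorm ipX (st_x s - x0) <= 2 * rho ->
  ipX (st_xi s - st_xip s) (st_x s - xh) <= gam_of ipX eta delta n s ->
  let s' := alg_step ipX ipY F Lstar gradRs sigma eta Lc mu0 mu1 rule beta delta yd n s in
  [/\ subdiff ipX domR Rf (st_xi s') (st_x s'),
      ipX (st_xi s' - st_xip s') (st_x s' - xh) <= gam_of ipX eta delta n.+1 s' &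
      (tau * delta < hnorm ipY (F (st_x s) - yd) ->
       bregman ipX Rf (st_xi s') xh (st_x s') +
         (1 - (1 + eta) / tau - eta - mu0 / (4 * sigma)) * Order.min (mu0 / Lc ^+ 2) mu1
          * tau ^+ 2 * delta ^+ 2
       <= bregman ipX Rf (st_xi s) xh (st_x s))].
Proof.
move=> HX HY s0 Hsc Hg dxh Fxh xhb HLlin /andP[eta0 eta1] Htcc Lc0 HLbd HLstar
  tau1 Hbeta m0 m1 c0p d0 hyd n s hsub hxb hIH s'.
have [e1 e2 e3 e4 [e5 e6 e7 e8]] := step_eqs ipX ipY F Lstar gradRs sigma eta Lc mu0 mu1
   rule beta delta yd n s.
rewrite -/s' in e1 e2 e3 e4 e5 e6 e7 e8.
set x := st_x s in e4 hsub hxb hIH *; set xi := st_xi s in e1 e2 hsub hIH *.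
set r := F x - yd in e1 e5 e6 e7 *; set g := Lstar x r in e1 e5 e7 *.
set a := alpha_of _ _ _ _ _ _ _ _ in e1 e5 e7 *.
set m := xi - st_xip s in e1 e7 hIH *.
set gm := gam_of _ _ _ _ _ in e7 e8 hIH *.
set b := beta_of _ _ _ _ _ _ _ in e1 e7 *.
have hgg : ipX g g <= Lc ^+ 2 * ipY r r.
  exact: (Lstar_bound HX HY Lc0 (HLbd x hxb) (HLstar x hxb)).
have [a0 [amin aB]] := alpha_facts rule HX HY Lc0 m0 m1 hgg.
rewrite -/a in a0 amin aB.
have [b0 bB] := beta_facts a g m gm HX s0 Hbeta.
rewrite -/b in b0 bB.
have hT := tang (L := L) (y := y) (yd := yd) (delta := delta) HX HY (HLlin x hxb)
  (Htcc xh x xhb hxb) (HLstar x hxb) Fxh hyd eta0.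
rewrite -/r -/g in hT.
have hd : st_xi s' - xi = - (a *: g) + b *: m.
  by rewrite e1 addrAC [xi - _ - _]addrAC subrr add0r.
set xi' := st_xi s' in e3 hd *.
set x' := st_x s' in e3 *.
have hdx : ipX (st_xi s' - xi) (x - xh) <= - (a * ((1 - eta) * hnorm ipY r ^+ 2
      - (1 + eta) * delta * hnorm ipY r)) + b * gm.
  rewrite hd ipDl // ipNl // !ipZl //.
  have := ler_wpM2l (ltW a0) hT; have := ler_wpM2l b0 hIH; lra.
split.
- rewrite e3; exact: gradRs_sub.
- rewrite /gam_of e2 e4 e5 e6 e7 e8 -/xi'.
  have -> : x' - xh = (x' - x) + (x - xh) by rewrite addrA subrK.
  rewrite ipDr //; lra.
move=> hres.
have cb := conj_bound HX s0 Hsc Hg xi' hsub.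
rewrite -e3 -/x' hd in cb.
have hid : bregman ipX Rf xi' xh x' = bregman ipX Rf xi xh x
    + (Rf x - Rf x' - ipX xi' (x - x')) + ipX (xi' - xi) (x - xh).
  rewrite /bregman !ipBl // !ipBr //; lra.
rewrite hid.
set c0 := 1 - (1 + eta) / tau - eta - mu0 / (4 * sigma).
set am := Order.min (mu0 / Lc ^+ 2) mu1.
set rho_r := hnorm ipY r.
have rr : ipY r r = rho_r ^+ 2 by rewrite hnorm_sq.
have s4 : 0 < 4 * sigma by rewrite mulr_gt0.
have tau0 : 0 < tau by apply: lt_trans tau1.
have q1 : a ^+ 2 * ipX g g / (4 * sigma) <= a * (mu0 / (4 * sigma)) * rho_r ^+ 2.
  rewrite -rr mulrA ler_pdivrMr // mulrAC [a * _ / _ * _]mulrAC divfK ?gt_eqF //.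
  have := ler_wpM2l (ltW a0) aB; nra.
have q2 : (1 + eta) * delta * rho_r <= (1 + eta) / tau * rho_r ^+ 2.
  have rp : 0 < rho_r by apply: le_lt_trans hres; rewrite mulr_ge0 // ltW.
  have : delta <= rho_r / tau by rewrite ler_pdivlMr // mulrC ltW.
  move=> h.
  have -> : (1 + eta) / tau * rho_r ^+ 2 = (1 + eta) * (rho_r / tau) * rho_r.
    by field; rewrite gt_eqF.
  apply: ler_wpM2r; first exact: ltW.
  by apply: ler_wpM2l => //; rewrite addr_ge0.
have q3 : am * (tau ^+ 2 * delta ^+ 2) <= a * rho_r ^+ 2.
  apply: ler_pM => //.
  - by rewrite le_min !ltW // divr_gt0 // exprn_gt0.
  - by rewrite mulr_ge0 ?sqr_ge0.
  have h1 := ltW hres; have h2 : 0 <= tau * delta by rewrite mulr_ge0 // ltW.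
  by rewrite -exprMn !expr2; apply: ler_pM.
have q4 : a * (mu0 / (4 * sigma)) * rho_r ^+ 2 - a * ((1 - eta) * rho_r ^+ 2
      - (1 + eta) * delta * rho_r) <= - (c0 * (a * rho_r ^+ 2)).
  have := ler_wpM2l (ltW a0) q2; rewrite /c0.
  move: (mu0 / (4 * sigma)) ((1 + eta) / tau) => k1 k2 h.
  suff : 0 <= a * (k2 * rho_r ^+ 2) - a * ((1 + eta) * delta * rho_r).
    move=> h'; rewrite -subr_ge0; have -> : - ((1 - k2 - eta - k1) * (a * rho_r ^+ 2)) -
      (a * k1 * rho_r ^+ 2 - a * ((1 - eta) * rho_r ^+ 2 - (1 + eta) * delta * rho_r)) =
      a * (k2 * rho_r ^+ 2) - a * ((1 + eta) * delta * rho_r) by ring.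
    done.
  by rewrite subr_ge0.
have q5 := ler_wpM2l (ltW c0p) q3.
move: bB cb hdx q1 q4 q5.
set D := bregman ipX Rf xi xh x; set B1 := Rf x - Rf x' - ipX xi' (x - x').
set I1 := ipX (xi' - xi) (x - xh).
set Q := ipX (- (a *: g) + b *: m) (- (a *: g) + b *: m) / (4 * sigma).
set A2 := a ^+ 2 * ipX g g / (4 * sigma).
set T := a * (mu0 / (4 * sigma)) * rho_r ^+ 2.
set T2 := a * ((1 - eta) * rho_r ^+ 2 - (1 + eta) * delta * rho_r).
set P := c0 * (a * rho_r ^+ 2); set P2 := c0 * (am * (tau ^+ 2 * delta ^+ 2)).
have -> : c0 * am * tau ^+ 2 * delta ^+ 2 = P2 by rewrite /P2; ring.
lra.
Qed.

Lemma weak_ball (R : realType) (X : lmodType R) (ip : X -> X -> R) (u : nat -> X) l c K :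
  is_inner_product ip -> weak_cvg ip u l -> (forall n, hnorm ip (u n - c) <= K) ->
  hnorm ip (l - c) <= K.
Proof.
move=> H hw hK; set z := l - c.
have h1 : seq_cvg (fun n => ip (u n - c) z) (ip z z).
  have := seq_cvgB (hw z) (seq_cvg_cst (ip c z)).
  by rewrite -ipBl //; apply: seq_cvg_ext => n; rewrite ipBl.
have h2 : ip z z <= K * hnorm ip z.
  apply: seq_cvg_le h1 => n; apply: le_trans (ip_le H _ _) _.
  apply: ler_wpM2r; [exact: hnorm_ge0 | exact: hK].
rewrite -hnorm_sq // in h2.
have := hnorm_ge0 ip z; move: h2; move: (hnorm ip z) => a h2 a0.
rewrite leNgt; apply/negP => h.
have K0 : 0 <= K by apply: le_trans (hK 0%N); apply: hnorm_ge0.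
have : K * a < a * a by rewrite ltr_pM2r //; apply: le_lt_trans h.
move=> hh; rewrite expr2 in h2; lra.
Qed.

Lemma small_lin (R : realType) (c q T0 : R) : 0 < T0 -> 0 <= q ->
  (forall t, 0 < t <= T0 -> 0 <= 2 * t * c + t ^+ 2 * q /\ 0 <= - (2 * t * c) + t ^+ 2 * q) ->
  c = 0.
Proof.
move=> T0p q0 H; apply/eqP/negPn/negP => cn.
have ca : 0 < `|c| by rewrite normr_gt0.
pose t := T0 * `|c| / (`|c| + T0 * q).
have den : 0 < `|c| + T0 * q by rewrite ltr_wpDr // mulr_ge0 // ltW.
have tp : 0 < t by rewrite divr_gt0 // mulr_gt0.
have tT : t <= T0.
  rewrite ler_pdivrMr // mulrDr; have := mulr_ge0 (ltW T0p) (mulr_ge0 (ltW T0p) q0); lra.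
have tt : 0 < t <= T0 by rewrite tp tT.
have [h1 h2] := H t tt.
have key : 2 * t * `|c| <= t ^+ 2 * q.
  by case: (ger0P c) => hc; lra.
have : 2 * `|c| <= t * q.
  have : t * (2 * `|c|) <= t * (t * q) by move: key; rewrite expr2; lra.
  by rewrite ler_pM2l.
rewrite /t mulrAC ler_pdivlMr //.
move=> h; have p0 := mulr_ge0 (ltW T0p) q0.
have : 2 * `|c| * `|c| + `|c| * (T0 * q) <= 0 by move: h; lra.
have := mulr_gt0 ca ca; have := mulr_ge0 (ltW ca) p0; lra.
Qed.


Unset Implicit Arguments.

Theorem mainTheorem4
  (R : realType) (X Y : lmodType R) (ipX : X -> X -> R) (ipY : Y -> Y -> R)
  (HX : is_hilbert ipX) (HY : is_hilbert ipY)
  (* the functional R, strongly convex with constant sigma *)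
  (domR : X -> Prop) (Rf : X -> R) (sigma : R) (Hsigma : 0 < sigma)
  (Hproper : proper_fun domR) (Hlsc : lsc_fun ipX domR Rf)
  (Hsc : strongly_convex ipX domR Rf sigma)
  (gradRs : X -> X) (HgradRs : is_grad_conj ipX domR Rf gradRs)
  (* assumption (b) *)
  (domF : X -> Prop) (F : X -> Y) (y : Y) (rho : R) (x0 xi0 : X)
  (Hrho : 0 < rho) (Hxi0 : subdiff ipX domR Rf xi0 x0)
  (Hball : forall x, hnorm ipX (x - x0) <= 2 * rho -> domF x)
  (Hsol : exists xb, domF xb /\ F xb = y /\ domR xb /\
            bregman ipX Rf xi0 xb x0 <= sigma * rho ^+ 2)
  (* assumption (c) *)
  (Hwc : weakly_closed ipX ipY domF F)
  (* assumption (d) *)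
  (L : X -> X -> Y) (Lstar : X -> Y -> X) (eta Lc : R)
  (HLlin : forall x, hnorm ipX (x - x0) <= 2 * rho ->
             forall (a : R) (u v : X), L x (a *: u + v) = a *: L x u + L x v)
  (HLcont : forall x, hnorm ipX (x - x0) <= 2 * rho ->
             forall eps : R, 0 < eps -> exists d : R, 0 < d /\
             forall x', hnorm ipX (x' - x0) <= 2 * rho -> hnorm ipX (x' - x) < d ->
             forall u, hnorm ipY (L x' u - L x u) <= eps * hnorm ipX u)
  (Heta : 0 <= eta < 1)
  (Htcc : forall x xb, hnorm ipX (x - x0) <= 2 * rho -> hnorm ipX (xb - x0) <= 2 * rho ->
             hnorm ipY (F x - F xb - L xb (x - xb)) <= eta * hnorm ipY (F x - F xb))
  (HLc : 0 < Lc)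
  (HLbd : forall x, hnorm ipX (x - x0) <= 2 * rho ->
             forall u, hnorm ipY (L x u) <= Lc * hnorm ipX u)
  (HLstar : forall x, hnorm ipX (x - x0) <= 2 * rho ->
             forall u v, ipY (L x u) v = ipX u (Lstar x v))
  (* parameters of Algorithm 1 *)
  (tau mu0 mu1 : R) (beta : option R) (rule : step_rule)
  (Htau : 1 < tau) (Hbeta : forall b, beta = Some b -> 0 < b)
  (Hmu0 : 0 < mu0) (Hmu1 : 0 < mu1)
  (Hcond : 0 < 1 - (1 + eta) / tau - eta - mu0 / (4 * sigma))
  (* noisy data *)
  (delta : nat -> R) (ydelta : nat -> Y)
  (Hdpos : forall k, 0 < delta k) (Hd0 : seq_cvg delta 0)
  (Hnoise : forall k, hnorm ipY (ydelta k - y) <= delta k) :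
  let xk := fun (k n : nat) =>
    alg_x ipX ipY F Lstar gradRs sigma eta Lc mu0 mu1 rule beta xi0 x0 (delta k) (ydelta k) n in
  exists nk : nat -> nat,
    (forall k, is_stop_index ipX ipY F Lstar gradRs sigma eta Lc mu0 mu1 rule beta xi0 x0
                 tau (delta k) (ydelta k) (nk k)) /\
    (exists (kl : nat -> nat) (xs : X),
        (forall l, (kl l < kl l.+1)%N) /\
        domF xs /\ F xs = y /\ hnorm ipX (xs - x0) <= 2 * rho /\
        weak_cvg ipX (fun l => xk (kl l) (nk (kl l))) xs) /\
    ((forall x, domR x) -> (forall x, Rf x = ipX x x / 2) ->
     forall xdag : X, domF xdag -> F xdag = y ->
       (forall z, domF z -> F z = y -> hnorm ipX (xdag - x0) <= hnorm ipX (z - x0)) ->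
       (forall x, hnorm ipX (x - x0) <= 2 * rho -> forall u, L xdag u = 0 -> L x u = 0) ->
       weak_cvg ipX (fun k => xk k (nk k)) xdag).
Proof.
move=> xk.
have H := HX.1; have HYi := HY.1.
have [xb [dFxb [Fxb [dRxb Dxb]]]] := Hsol.
set D0 := bregman ipX Rf xi0 xb x0.
have [eta0 eta1] : 0 <= eta /\ eta < 1 by case/andP: Heta.
have rho2 : 0 <= 2 * rho by rewrite mulr_ge0 // ltW.
have xb0 : hnorm ipX (xb - x0) <= rho.
  apply: hnorm_le => //; first exact: ltW.
  have := bregman_lb H Hsigma Hsc Hxi0 dRxb; rewrite -/D0 => h.
  by rewrite -(ler_pM2l Hsigma); apply: le_trans h Dxb.
have xbb : hnorm ipX (xb - x0) <= 2 * rho by apply: le_trans xb0 _; lra.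
have ballP : forall xi x, subdiff ipX domR Rf xi x -> bregman ipX Rf xi xb x <= D0 ->
    hnorm ipX (x - x0) <= 2 * rho.
  move=> xi x hs hD.
  have h := bregman_lb H Hsigma Hsc hs dRxb.
  have : hnorm ipX (xb - x) <= rho.
    apply: hnorm_le => //; first exact: ltW.
    by rewrite -(ler_pM2l Hsigma); apply: le_trans h (le_trans hD Dxb).
  rewrite hnormB // => h2.
  by apply: le_trans (hnormBD H x xb x0) _; lra.
pose ST dl yv n := alg_state_at ipX ipY F Lstar gradRs sigma eta Lc mu0 mu1 rule beta
  xi0 x0 dl yv n.
pose c0 := 1 - (1 + eta) / tau - eta - mu0 / (4 * sigma).
pose am := Order.min (mu0 / Lc ^+ 2) mu1.
have am0 : 0 < am by rewrite lt_min Hmu1 andbT divr_gt0 // exprn_gt0.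
have tau0 : 0 < tau by apply: lt_trans Htau.
pose cst dl := c0 * am * tau ^+ 2 * dl ^+ 2.
have cst0 : forall dl, 0 < dl -> 0 < cst dl.
  by move=> d d0; rewrite /cst !mulr_gt0 // exprn_gt0.
have INV : forall dl yv, 0 < dl -> hnorm ipY (yv - y) <= dl -> forall n,
    (forall m, (m < n)%N -> tau * dl < hnorm ipY (F (st_x (ST dl yv m)) - yv)) ->
    [/\ subdiff ipX domR Rf (st_xi (ST dl yv n)) (st_x (ST dl yv n)),
        ipX (st_xi (ST dl yv n) - st_xip (ST dl yv n)) (st_x (ST dl yv n) - xb)
          <= gam_of ipX eta dl n (ST dl yv n) &
        bregman ipX Rf (st_xi (ST dl yv n)) xb (st_x (ST dl yv n)) + cst dl * n%:R
          <= D0].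
  move=> dl yv d0 hyd; elim=> [|n IH] hpre.
    split => //=; first by rewrite subrr ip0l.
    by rewrite mulr0 addr0.
  have [h1 h2 h3] := IH (fun m hm => hpre m (ltnW hm)).
  have hb : hnorm ipX (st_x (ST dl yv n) - x0) <= 2 * rho.
    apply: ballP h1 _; have := cst0 _ d0; have := ler0n R n.
    move: (cst dl) (n%:R : R) h3 => c k h3 c0' k0; nra.
  have [i1 i2 i3] := inv_step (L := L) (tau := tau) rule HX.1 HY.1 Hsigma Hsc HgradRs dRxb Fxb xbb
    HLlin Heta Htcc HLc HLbd HLstar Htau Hbeta Hmu0 Hmu1 Hcond d0 hyd h1 hb h2.
  split => //.
  have := i3 (hpre n (ltnSn n)).
  change (ST dl yv n.+1) with (alg_step ipX ipY F Lstar gradRs sigma eta Lc mu0 mu1 rule beta dl yv n (ST dl yv n)).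
  rewrite -[n.+1]addn1 natrD mulrDr mulr1; rewrite /cst /c0 /am in h3 *; lra.
have BALL : forall dl yv, 0 < dl -> hnorm ipY (yv - y) <= dl -> forall n,
    (forall m, (m < n)%N -> tau * dl < hnorm ipY (F (st_x (ST dl yv m)) - yv)) ->
    hnorm ipX (st_x (ST dl yv n) - x0) <= 2 * rho.
  move=> dl yv d0 hyd n hpre; have [h1 _ h3] := INV dl yv d0 hyd n hpre.
  apply: ballP h1 _; have := cst0 _ d0; have := ler0n R n.
  move: (cst dl) (n%:R : R) h3 => c k h3 c0' k0; nra.
have STOP : forall dl yv, 0 < dl -> hnorm ipY (yv - y) <= dl ->
    exists n, is_stop_index ipX ipY F Lstar gradRs sigma eta Lc mu0 mu1 rule beta xi0 x0
      tau dl yv n.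
  move=> dl yv d0 hyd.
  pose P n := hnorm ipY (F (st_x (ST dl yv n)) - yv) <= tau * dl.
  have [ex|nex] := classic (exists n, P n).
    case: (ex_minnP ex) => n Pn hmin; exists n; split; first exact: Pn.
    move=> m mn; rewrite ltNge; apply/negP => Pm.
    by have := hmin m Pm; rewrite leqNgt mn.
  exfalso.
  have all : forall m, (m < (Num.trunc (D0 / cst dl)).+1)%N ->
      tau * dl < hnorm ipY (F (st_x (ST dl yv m)) - yv).
    move=> m _; rewrite ltNge; apply/negP => Pm; apply: nex; by exists m.
  have [h1 _ h3] := INV dl yv d0 hyd _ all.
  have hb := bregman_lb H Hsigma Hsc h1 dRxb.
  have := ip_ge0 H (xb - st_x (ST dl yv (Num.trunc (D0 / cst dl)).+1)).
  have := truncnS_gt (D0 / cst dl).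
  have cp := cst0 _ d0.
  rewrite ltr_pdivrMr // => h4 h5.
  have : 0 <= sigma * ipX (xb - st_x (ST dl yv (Num.trunc (D0 / cst dl)).+1))
     (xb - st_x (ST dl yv (Num.trunc (D0 / cst dl)).+1)) by rewrite mulr_ge0 // ltW.
  move: h3 hb h4; rewrite [_%:R * _]mulrC.
  move: (cst dl * _) => q; move: (bregman _ _ _ _ _) => bb; lra.
have hk : forall k, {n | is_stop_index ipX ipY F Lstar gradRs sigma eta Lc mu0 mu1 rule beta
    xi0 x0 tau (delta k) (ydelta k) n}.
  by move=> k; apply: constructive_indefinite_description; apply: STOP.
pose nk k := proj1_sig (hk k).
have nkP : forall k, is_stop_index ipX ipY F Lstar gradRs sigma eta Lc mu0 mu1 rule beta
    xi0 x0 tau (delta k) (ydelta k) (nk k) by move=> k; exact: proj2_sig (hk k).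
exists nk; split => //.
pose u k := xk k (nk k).
have uball : forall k, hnorm ipX (u k - x0) <= 2 * rho.
  move=> k; have [_ hpre] := nkP k.
  exact: (BALL _ _ (Hdpos k) (Hnoise k) (nk k) hpre).
have ubd : forall k, hnorm ipX (u k) <= hnorm ipX x0 + 2 * rho.
  move=> k; have := hnormD H (u k - x0) x0; rewrite subrK.
  have := uball k; lra.
have ures : forall k, hnorm ipY (F (u k) - y) <= (tau + 1) * delta k.
  move=> k; have [h1 _] := nkP k.
  have := hnormBD HYi (F (u k)) (ydelta k) y; have := Hnoise k.
  rewrite /u /xk; move: h1; rewrite /alg_x; lra.
have CLS : forall (th : nat -> nat) xs, (forall l, (th l < th l.+1)%N) ->
    weak_cvg ipX (fun l => u (th l)) xs ->
    [/\ domF xs, F xs = y & hnorm ipX (xs - x0) <= 2 * rho].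
  move=> th xs hth hw.
  have sc : strong_cvg ipY (fun l => F (u (th l))) y.
    apply: (seq_cvg_squeeze (v := fun l => (tau + 1) * delta (th l))).
      by move=> l; rewrite subr0 ger0_norm ?hnorm_ge0 //; apply: ures.
    have := seq_cvgM (tau + 1) (seq_cvg_sub (incr_ge hth) Hd0); rewrite mulr0; exact.
  have [d1 d2] := Hwc (fun l => u (th l)) xs y (fun l => Hball _ (uball _)) hw sc.
  split => //; exact: weak_ball H hw (fun l => uball (th l)).
split.
  have [s [hs [xs hxs]]] := weak_compact HX ubd.
  have [d1 d2 d3] := CLS s xs hs hxs.
  by exists s, xs.
move=> Hdom Hquad xdag dxd Fxd Hmin Hker.
have gradId : forall xi, gradRs xi = xi.
  move=> xi; have [_ h] := HgradRs xi; have := h xi (Hdom xi); rewrite !Hquad.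
  set g := gradRs xi => h1.
  have h2 : ipX (g - xi) (g - xi) <= 0.
    rewrite ip_expandB // (ipC H g xi); lra.
  have h3 : ipX (g - xi) (g - xi) = 0 by apply/eqP; rewrite eq_le h2 ip_ge0.
  by apply/eqP; rewrite -subr_eq0; apply/eqP; apply: (ip_eq0 H).
have xi0x0 : xi0 = x0.
  have := Hxi0.2 xi0 (Hdom xi0); rewrite !Hquad ipBr // => h1.
  have h2 : ipX (xi0 - x0) (xi0 - x0) <= 0.
    rewrite ip_expandB // (ipC H xi0 x0) in h1 *; lra.
  have h3 : ipX (xi0 - x0) (xi0 - x0) = 0 by apply/eqP; rewrite eq_le h2 ip_ge0.
  by apply/eqP; rewrite -subr_eq0; apply/eqP; apply: (ip_eq0 H).
have xd0 : hnorm ipX (xdag - x0) <= rho by apply: le_trans (Hmin xb dFxb Fxb) xb0.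
have xdb : hnorm ipX (xdag - x0) <= 2 * rho by apply: le_trans xd0 _; lra.
have orth_dag : forall w, L xdag w = 0 -> ipX (xdag - x0) w = 0.
  move=> w hw.
  pose T0 := rho / (hnorm ipX w + 1).
  have hw1 : 0 < hnorm ipX w + 1 by rewrite ltr_wpDl ?hnorm_ge0.
  have T0p : 0 < T0 by rewrite divr_gt0.
  have key : forall t, `|t| <= T0 ->
      0 <= 2 * t * ipX (xdag - x0) w + t ^+ 2 * ipX w w.
    move=> t ht; set v := xdag + t *: w.
    have vb : hnorm ipX (v - x0) <= 2 * rho.
      have -> : v - x0 = (xdag - x0) + t *: w by rewrite /v addrAC.
      apply: le_trans (hnormD H _ _) _; rewrite hnormZ //.
      have : `|t| * hnorm ipX w <= rho.
        have := ler_wpM2r (hnorm_ge0 ipX w) ht; rewrite /T0 mulrAC.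
        move=> h; apply: le_trans h _; rewrite ler_pdivrMr // mulrDr mulr1; lra.
      lra.
    have Fv : F v = y.
      have := Htcc v xdag vb xdb.
      have -> : v - xdag = t *: w by rewrite /v addrAC subrr add0r.
      rewrite -[t *: w]addr0 HLlin // hw scaler0 add0r (lin0 (HLlin xdag xdb)) subr0 Fxd.
      move=> h; have hn := hnorm_ge0 ipY (F v - y).
      have h0 : hnorm ipY (F v - y) = 0 by apply/eqP; rewrite eq_le hn andbT; nra.
      by apply/eqP; rewrite -subr_eq0; apply/eqP; apply: (hnorm_eq0 HYi).
    have := Hmin v (Hball _ vb) Fv.
    have -> : v - x0 = (xdag - x0) + t *: w by rewrite /v addrAC.
    move=> h.
    have h' : hnorm ipX (xdag - x0) ^+ 2 <= hnorm ipX (xdag - x0 + t *: w) ^+ 2.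
      by apply: ler_pM => //; exact: hnorm_ge0.
    rewrite !hnorm_sq // (ip_expand H (xdag - x0) (t *: w)) !ipZr // !ipZl // in h'; lra.
  apply: (small_lin T0p (ip_ge0 H w)) => t /andP[t0 tT]; split.
    by apply: key; rewrite ger0_norm // ltW.
  have ht : `|- t| <= T0 by rewrite normrN ger0_norm // ltW.
  by have := key (- t) ht; rewrite sqrrN mulrN mulNr.
pose O v := forall w, L xdag w = 0 -> ipX v w = 0.
have ORTH : forall dl yv, 0 < dl -> hnorm ipY (yv - y) <= dl -> forall n,
    (forall m, (m < n)%N -> tau * dl < hnorm ipY (F (st_x (ST dl yv m)) - yv)) ->
    [/\ O (st_xi (ST dl yv n) - x0), O (st_xip (ST dl yv n) - x0) &
        st_x (ST dl yv n) = st_xi (ST dl yv n)].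
  move=> dl yv d0 hyd; elim=> [|n IH] hpre.
    by split => //= w _; rewrite xi0x0 subrr ip0l.
  have [o1 o2 o3] := IH (fun m hm => hpre m (ltnW hm)).
  have hb := BALL dl yv d0 hyd n (fun m hm => hpre m (ltnW hm)).
  change (ST dl yv n.+1) with (alg_step ipX ipY F Lstar gradRs sigma eta Lc mu0 mu1 rule
    beta dl yv n (ST dl yv n)).
  have [e1 e2 e3 e4 _] := step_eqs ipX ipY F Lstar gradRs sigma eta Lc mu0 mu1 rule beta dl yv
    n (ST dl yv n).
  set s' := alg_step _ _ _ _ _ _ _ _ _ _ _ _ _ _ _ _ in e1 e2 e3 e4 *.
  have og : forall w, L xdag w = 0 ->
      ipX (Lstar (st_x (ST dl yv n)) (F (st_x (ST dl yv n)) - yv)) w = 0.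
    move=> w hw; rewrite ipC // -HLstar // (Hker _ hb w hw) ip0l //; exact: HYi.
  split.
  - move=> w hw; rewrite e1.
    have h1 := o1 w hw; have h2 := o2 w hw; have h3 := og w hw.
    rewrite !ipBl // in h1 h2; rewrite !ipBl // !ipDl // !ipNl // !ipZl // !ipBl //.
    have -> : ipX (st_xi (ST dl yv n)) w = ipX x0 w by lra.
    have -> : ipX (st_xip (ST dl yv n)) w = ipX x0 w by lra.
    by rewrite h3 subrr !mulr0 subr0 addr0 subrr.
  - by rewrite e2.
  - by rewrite e3 gradId.
have uorth : forall k w, L xdag w = 0 -> ipX (u k) w = ipX x0 w.
  move=> k w hw; have [_ hpre] := nkP k.
  have [o1 _ o3] := ORTH _ _ (Hdpos k) (Hnoise k) (nk k) hpre.
  have := o1 w hw; rewrite /u /xk /alg_x -/(ST _ _ _) o3 ipBl //; lra.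
move=> z; apply: NNPP => hnc.
have [e [e0 he]] : exists e, 0 < e /\ forall N, exists n, (N <= n)%N /\
    ~ (`|ipX (u n) z - ipX xdag z| < e).
  apply: NNPP => hh; apply: hnc => e e0; apply: NNPP => hN; apply: hh.
  exists e; split => // N; apply: NNPP => hn; apply: hN; exists N => n Nn.
  apply: NNPP => hlt; apply: hn; by exists n.
have [th [hth bad]] := @subseq_ex (fun _ n => ~ (`|ipX (u n) z - ipX xdag z| < e))
  (fun _ N => he N).
have [th2 [hth2 [xs hxs]]] := weak_compact HX (fun l => ubd (th l)).
have hth3 : forall l, (th (th2 l) < th (th2 l.+1))%N by apply: incr_comp.
have [d1 d2 d3] := CLS _ xs hth3 hxs.
have oxs : forall w, L xdag w = 0 -> ipX (xs - x0) w = 0.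
  move=> w hw; rewrite ipBl //; apply/eqP; rewrite subr_eq0; apply/eqP.
  apply: seq_cvg_unique (hxs w) _.
  by apply: seq_cvg_ext (seq_cvg_cst (ipX x0 w)) => l; rewrite uorth.
have kxs : L xdag (xs - xdag) = 0.
  have := Htcc xs xdag d3 xdb; rewrite d2 Fxd subrr hnorm0 // mulr0 sub0r hnormN // => h.
  have : hnorm ipY (L xdag (xs - xdag)) = 0 by apply/eqP; rewrite eq_le h hnorm_ge0.
  exact: hnorm_eq0.
have exs : xs = xdag.
  have : ipX (xs - xdag) (xs - xdag) = 0.
    have -> : ipX (xs - xdag) (xs - xdag) = ipX ((xs - x0) - (xdag - x0)) (xs - xdag).
      by rewrite opprB addrA subrK.
    by rewrite ipBl // oxs // orth_dag // subrr.
  by move/(ip_eq0 H)/eqP; rewrite subr_eq0 => /eqP.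
rewrite exs in hxs.
have [N HN] := hxs z e e0.
exact: bad (th2 N) (HN N (leqnn N)).
Qed.
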